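(* Let $f:\mathbb{R}^n\to\mathbb{R}$ be a convex function of class $C^2$. (i) Suppose $f\in\mathcal{F}$. Then for every increasing function $G:\mathbb{R}\to\mathbb{R}$ of class $C^1$ with $G(0)=0$, there exists $\phi\in\mathcal{F}$ such that: - for all $x$ with $\nabla f(x)\neq0$, $$\nabla\phi(x)=G(\|\nabla f(x)\|)\,\frac{\nabla f(x)}{\|\nabla f(x)\|}; \qquad (\ast)$$ - for all $x$ with $\nabla f(x)=0$, $\nabla\phi(x)=0$. (ii) Suppose there exist an increasing function $G:\mathbb{R}\to\mathbb{R}$ of class $C^1$ and a convex function $\phi:\mathbb{R}^n\to\mathbb{R}$ of class $C^2$ such that: - $G(0)=0$; - $sG'(s)-G(s)\neq0$ for almost every $s\in\mathbb{R}$; - $(\ast)$ holds at every $x$ with $\nabla f(x)\ne0$. Then $f\in\mathcal{F}$.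
   Context: $\|\cdot\|$ is the Euclidean norm on $\mathbb{R}^n$. $\mathcal{F}$ denotes the set of functions $f:\mathbb{R}^n\to\mathbb{R}$ such that: 1. $f$ is convex and of class $C^2$; 2. for every $x\in\mathbb{R}^n$ there exists $\lambda\in\mathbb{R}$ with $\mathrm{Hess}\,f(x)\,\nabla f(x)=\lambda\,\nabla f(x)$. *)

(* Defs.v *)
From Stdlib Require Import Reals.
From mathcomp Require Import ssreflect ssrfun ssrbool eqtype ssrnat seq fintype bigop.

Open Scope R_scope.

Definition vec (n : nat) := 'I_n -> R.

Definition vzero {n} : vec n := fun _ => 0.
Definition vadd {n} (x y : vec n) : vec n := fun i => x i + y i.
Definition vscale {n} (t : R) (x : vec n) : vec n := fun i => t * x i.
Definition vbasis {n} (i : 'I_n) : vec n := fun j => if j == i then 1 else 0.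

Definition vsum {n} (F : 'I_n -> R) : R := \big[Rplus/0]_(i < n) F i.

Definition vnorm {n} (x : vec n) : R := sqrt (vsum (fun i => x i * x i)).

Definition vcontinuous {n} (g : vec n -> R) : Prop :=
  forall x eps, 0 < eps -> exists delta, 0 < delta /\
    forall y, vnorm (vadd y (vscale (-1) x)) < delta -> Rabs (g y - g x) < eps.

Definition has_partial {n} (g : vec n -> R) (i : 'I_n) (x : vec n) (l : R) : Prop :=
  derivable_pt_lim (fun t => g (vadd x (vscale t (vbasis i)))) 0 l.

Definition is_grad {n} (g : vec n -> R) (x v : vec n) : Prop :=
  forall i, has_partial g i x (v i).

Definition is_hess {n} (g : vec n -> R) (x : vec n) (H : 'I_n -> 'I_n -> R) : Prop :=
  exists Dg : vec n -> vec n, (forall y, is_grad g y (Dg y)) /\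
    forall i j, has_partial (fun y => Dg y i) j x (H i j).

Definition C2fun {n} (g : vec n -> R) : Prop :=
  exists (Dg : vec n -> vec n) (D2g : vec n -> 'I_n -> 'I_n -> R),
    (forall x, is_grad g x (Dg x)) /\
    (forall x i j, has_partial (fun y => Dg y i) j x (D2g x i j)) /\
    (forall i, vcontinuous (fun x => Dg x i)) /\
    (forall i j, vcontinuous (fun x => D2g x i j)).

Definition convex {n} (g : vec n -> R) : Prop :=
  forall x y t, 0 <= t <= 1 ->
    g (vadd (vscale t x) (vscale (1 - t) y)) <= t * g x + (1 - t) * g y.

Definition mat_app {n} (H : 'I_n -> 'I_n -> R) (v : vec n) : vec n :=
  fun i => vsum (fun j => H i j * v j).

Definition classF {n} (g : vec n -> R) : Prop :=
  convex g /\ C2fun g /\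
  forall x v H, is_grad g x v -> is_hess g x H ->
    exists lam : R, mat_app H v = vscale lam v.

Definition nondecr (G : R -> R) : Prop := forall s t, s <= t -> G s <= G t.

Definition C1_with (G G' : R -> R) : Prop :=
  (forall s, derivable_pt_lim G s (G' s)) /\ continuity G'.

Definition C1fun (G : R -> R) : Prop := exists G', C1_with G G'.

(* Lebesgue-null subsets of R: coverable by countably many intervals of
   arbitrarily small total length. *)
Definition negligible (A : R -> Prop) : Prop :=
  forall eps, 0 < eps -> exists a b : nat -> R,
    (forall k, a k <= b k) /\
    (forall s, A s -> exists k, a k <= s <= b k) /\
    (forall N, sum_f_R0 (fun k => b k - a k) N <= eps).

Definition almost_everywhere (P : R -> Prop) : Prop :=
  negligible (fun s => ~ P s).

(* Main.v *)
Require Import Defs.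
From Stdlib Require Import Reals Lra Classical FunctionalExtensionality.
From Coquelicot Require Import Coquelicot.
From mathcomp Require Import ssreflect ssrfun ssrbool eqtype ssrnat seq fintype bigop.
From HB Require Import structures.
Open Scope R_scope.


Lemma Rplus_assoc' : associative Rplus. Proof. move=> a b c; by rewrite Rplus_assoc. Qed.
HB.instance Definition _ := Monoid.isComLaw.Build R 0 Rplus Rplus_assoc' Rplus_comm Rplus_0_l.

Section VS.
Context {n : nat}.
Implicit Types F G : 'I_n -> R.

Lemma vsum_ext F G : (forall i, F i = G i) -> vsum F = vsum G.
Proof. move=> H; rewrite /vsum; apply: eq_bigr => i _; exact: H. Qed.

Lemma vsum_add F G : vsum (fun i => F i + G i) = vsum F + vsum G.
Proof. rewrite /vsum; exact: big_split. Qed.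

Lemma vsum_scal c F : vsum (fun i => c * F i) = c * vsum F.
Proof.
rewrite /vsum; apply: (big_rec2 (fun a b => b = c * a)); first by ring.
by move=> i y1 y2 _ ->; ring.
Qed.

Lemma vsum_scalr c F : vsum (fun i => F i * c) = vsum F * c.
Proof. rewrite (vsum_ext _ (fun i => c * F i)); first by rewrite vsum_scal; ring.
by move=> i; ring. Qed.

Lemma vsum_zero : vsum (fun _ : 'I_n => 0) = 0.
Proof. rewrite /vsum; exact: big1. Qed.

Lemma vsum_opp F : vsum (fun i => - F i) = - vsum F.
Proof. rewrite (vsum_ext _ (fun i => (-1) * F i)); first by rewrite vsum_scal; ring.
by move=> i; ring. Qed.

Lemma vsum_sub F G : vsum (fun i => F i - G i) = vsum F - vsum G.
Proof. by rewrite vsum_add vsum_opp. Qed.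

Lemma vsum_delta i F : vsum (fun j => vbasis i j * F j) = F i.
Proof.
rewrite /vsum (bigD1 i) //= /vbasis eqxx big1 ?Rmult_1_l ?Rplus_0_r //.
by move=> j /negbTE ->; ring.
Qed.

Lemma vsum_deltar i F : vsum (fun j => F j * vbasis i j) = F i.
Proof. rewrite -(vsum_delta i F); apply: vsum_ext => j; ring. Qed.

Lemma vsum_swap (F : 'I_n -> 'I_n -> R) :
  vsum (fun i => vsum (fun j => F i j)) = vsum (fun j => vsum (fun i => F i j)).
Proof. rewrite /vsum; exact: exchange_big. Qed.

Lemma vsum_le F G : (forall i, F i <= G i) -> vsum F <= vsum G.
Proof.
move=> H; rewrite /vsum; apply: (big_ind2 (fun a b => a <= b)); first lra.
- move=> *; lra.
- move=> i _; exact: H.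
Qed.

Lemma vsum_ge0 F : (forall i, 0 <= F i) -> 0 <= vsum F.
Proof. move=> H; rewrite -vsum_zero; exact: vsum_le. Qed.

Lemma vsum_abs F : Rabs (vsum F) <= vsum (fun i => Rabs (F i)).
Proof.
rewrite /vsum; apply: (big_rec2 (fun a b => Rabs a <= b)).
- rewrite Rabs_R0; lra.
- move=> i y1 y2 _ H; apply: Rle_trans (Rabs_triang _ _) _; lra.
Qed.

Lemma vsum_term_le F i : (forall j, 0 <= F j) -> F i <= vsum F.
Proof.
move=> H; rewrite /vsum (bigD1 i) //=.
rewrite -[X in X <= _]Rplus_0_r; apply: Rplus_le_compat_l.
apply: (big_ind (fun a => 0 <= a)); [lra| move=> *; lra | move=> j _; exact: H].
Qed.

End VS.



Lemma vec_eq n (x y : vec n) : (forall i, x i = y i) -> x = y.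
Proof. move=> H; apply: functional_extensionality => i; exact: H. Qed.

Section Norm.
Context {n : nat}.
Implicit Types x y : vec n.

Lemma vsum_sq_ge0 x : 0 <= vsum (fun i => x i * x i).
Proof. apply: vsum_ge0 => i; nra. Qed.

Lemma vnorm_ge0 x : 0 <= vnorm x.
Proof. exact: sqrt_pos. Qed.

Lemma vnorm_sq x : vnorm x * vnorm x = vsum (fun i => x i * x i).
Proof. rewrite /vnorm sqrt_sqrt //; exact: vsum_sq_ge0. Qed.

Lemma coord_le_vnorm x i : Rabs (x i) <= vnorm x.
Proof.
rewrite /vnorm -sqrt_Rsqr_abs; apply: sqrt_le_1_alt.
rewrite /Rsqr; apply: (@vsum_term_le n (fun i => x i * x i)) => j; nra.
Qed.

Lemma vnorm_eq0 x : vnorm x = 0 -> x = vzero.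
Proof.
move=> H; apply: vec_eq => i; have := coord_le_vnorm x i; rewrite H /vzero.
move=> H1; have := Rabs_pos (x i); move=> H2.
have : Rabs (x i) = 0 by lra. by move/Rabs_eq_0.
Qed.

Lemma vnorm_zero : vnorm (@vzero n) = 0.
Proof. rewrite /vnorm (vsum_ext _ (fun _ => 0)) ?vsum_zero ?sqrt_0 // => i; rewrite /vzero; ring. Qed.

Lemma vnorm_le_sum x : vnorm x <= vsum (fun i => Rabs (x i)).
Proof.
have H : vsum (fun i => x i * x i) <= vsum (fun i => Rabs (x i)) * vsum (fun i => Rabs (x i))
     /\ 0 <= vsum (fun i => Rabs (x i)).
  rewrite /vsum; apply: (big_rec2 (fun a b => a <= b * b /\ 0 <= b)); first lra.
  move=> i y1 y2 _ [H1 H2]; have := Rabs_pos (x i); have := Rsqr_abs (x i); rewrite /Rsqr.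
  move=> E H3; split; last lra. rewrite E; nra.
case: H => H1 H2; rewrite /vnorm -(sqrt_Rsqr _ H2); apply: sqrt_le_1_alt; exact: H1.
Qed.

Lemma vnorm_scale t x : vnorm (vscale t x) = Rabs t * vnorm x.
Proof.
rewrite /vnorm (vsum_ext _ (fun i => (t * t) * (x i * x i))); last by move=> i; rewrite /vscale; ring.
rewrite vsum_scal sqrt_mult; [|nra| exact: vsum_sq_ge0].
by rewrite -sqrt_Rsqr_abs.
Qed.

End Norm.

Lemma filter_forall_fin {T} (F : (T -> Prop) -> Prop) {FF : Filter F} n
  (P : 'I_n -> T -> Prop) : (forall k, F (P k)) -> F (fun y => forall k, P k y).
Proof.
move=> H.
have : forall s : seq 'I_n, F (fun y => forall k, k \in s -> P k y).
  elim=> [|a s IH].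
    by apply: filter_forall => y k.
  apply: filter_imp (filter_and _ _ (H a) IH) => y [H1 H2] k.
  rewrite in_cons => /orP [/eqP -> //| Hk]; exact: H2.
move=> /(_ (enum 'I_n)) Hs; apply: filter_imp Hs => y Hy k; apply: Hy; by rewrite mem_enum.
Qed.

Definition V n := fct_UniformSpace 'I_n R_UniformSpace.

Lemma ball_V n (x y : V n) eps : ball x eps y <-> forall i, Rabs (y i - x i) < eps.
Proof. by split. Qed.

Lemma ball_R (x y : R) eps : ball x eps y <-> Rabs (y - x) < eps.
Proof. by split. Qed.

Section Cont.
Context {U : UniformSpace}.

Lemma cR_plus (f g : U -> R) (x : U) : continuous f x -> continuous g x -> continuous (fun y => f y + g y) x.
Proof. exact: continuous_plus. Qed.
Lemma cR_mult (f g : U -> R) (x : U) : continuous f x -> continuous g x -> continuous (fun y => f y * g y) x.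
Proof. exact: continuous_mult. Qed.
Lemma cR_opp (f : U -> R) (x : U) : continuous f x -> continuous (fun y => - f y) x.
Proof. exact: continuous_opp. Qed.
Lemma cR_minus (f g : U -> R) (x : U) : continuous f x -> continuous g x -> continuous (fun y => f y - g y) x.
Proof. move=> *; apply: cR_plus => //; exact: cR_opp. Qed.
Lemma cR_const (c : R) (x : U) : continuous (fun _ : U => c) x.
Proof. exact: continuous_const. Qed.
Lemma cR_comp (f : U -> R) (h : R -> R) (x : U) : continuous f x -> continuous h (f x) ->
  continuous (fun y => h (f y)) x.
Proof. move=> *; exact: continuous_comp. Qed.
Lemma cR_inv (f : U -> R) (x : U) : continuous f x -> f x <> 0 -> continuous (fun y => / f y) x.
Proof.
move=> H1 H2; apply: cR_comp => //.
apply: (continuous_Rinv_comp (fun z => z)) => //; exact: continuous_id.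
Qed.
Lemma cR_sqrt (f : U -> R) (x : U) : continuous f x -> continuous (fun y => sqrt (f y)) x.
Proof.
move=> H1; apply: cR_comp => //.
apply: (continuous_sqrt_comp (fun z => z)) => //; exact: continuous_id.
Qed.
Lemma cR_vsum n (h : 'I_n -> U -> R) (x : U) : (forall k, continuous (h k) x) ->
  continuous (fun y => vsum (fun k => h k y)) x.
Proof.
move=> H; rewrite /vsum; elim: (index_enum _) => [|a s IH].
  apply: continuous_ext (cR_const 0 x) => y; by rewrite big_nil.
apply: continuous_ext (cR_plus _ _ _ (H a) IH) => y; by rewrite big_cons.
Qed.

Lemma cV_of n (F : U -> V n) (x : U) : (forall i, continuous (fun y => F y i) x) -> continuous F x.
Proof.
move=> H; apply/filterlim_locally => eps.
have : locally x (fun y => forall k, ball (F x k) eps (F y k)).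
  apply: (filter_forall_fin (locally x) n (fun k y => ball (F x k) eps (F y k))) => k.
  by move: (H k) => /filterlim_locally; apply.
apply: filter_imp => y; exact.
Qed.

Lemma cV_coord n (F : U -> V n) (x : U) i : continuous F x -> continuous (fun y => F y i) x.
Proof.
move=> H; apply/filterlim_locally => eps; move: H => /filterlim_locally /(_ eps).
apply: filter_imp => y; exact.
Qed.
End Cont.

Lemma vcont_to n (g : vec n -> R) : vcontinuous g -> forall x : V n, continuous g x.
Proof.
move=> H x; apply/filterlim_locally => eps.
have [d [Hd Hy]] := H x eps (cond_pos eps).
have Hd' : 0 < d / (INR n + 1) by apply: Rdiv_lt_0_compat => //; have := pos_INR n; lra.
exists (mkposreal _ Hd') => y /= Hb; apply/ball_R; apply: Hy.
eapply Rle_lt_trans; [apply: vnorm_le_sum|].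
eapply Rle_lt_trans with (r2 := vsum (fun _ : 'I_n => d / (INR n + 1))).

  apply: vsum_le => i; rewrite /vadd /vscale; have -> : y i + -1 * x i = y i - x i by ring.
  have := Hb i; rewrite /ball /= /fct_ball => /ball_R; lra.
rewrite /vsum big_const card_ord.
have -> : forall m (c : R), iter m (Rplus c) 0 = INR m * c.
  elim=> [|m IH] c; first by rewrite /=; ring. rewrite [iter _ _ _]/= IH S_INR; ring.
have := pos_INR n; move=> Hn.
have -> : INR n * (d / (INR n + 1)) = d * (INR n / (INR n + 1)) by field; lra.
have : INR n / (INR n + 1) < 1. { apply: (Rmult_lt_reg_r (INR n + 1)); first lra. rewrite /Rdiv Rmult_assoc Rinv_l; lra. }
nra.
Qed.

Lemma vcont_from n (g : vec n -> R) : (forall x : V n, continuous g x) -> vcontinuous g.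
Proof.
move=> H x eps Heps; move: (H x) => /filterlim_locally /(_ (mkposreal _ Heps)) [d Hd].
exists d; split; first exact: cond_pos.
move=> y Hy; apply/ball_R; apply: Hd => i; apply/ball_R.
have E : (vadd y (vscale (-1) x)) i = y i - x i by rewrite /vadd /vscale; ring.
rewrite -E; have := coord_le_vnorm (vadd y (vscale (-1) x)) i; lra.
Qed.

Lemma vsum_const n (c : R) : vsum (fun _ : 'I_n => c) = INR n * c.
Proof.
rewrite /vsum big_const card_ord.
elim: n => [|m IH]; first by rewrite /=; ring.
rewrite [iter _ _ _]/= IH S_INR; ring.
Qed.


Definition frechet {n} (g : vec n -> R) (y D : vec n) :=
  forall eps, 0 < eps -> exists delta, 0 < delta /\ forall h : vec n,
    (forall i, Rabs (h i) < delta) ->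
    Rabs (g (vadd y h) - g y - vsum (fun i => D i * h i)) <= eps * vsum (fun i => Rabs (h i)).

Lemma partial_at n (g : vec n -> R) i (p : vec n) c l :
  has_partial g i (vadd p (vscale c (vbasis i))) l ->
  derivable_pt_lim (fun t => g (vadd p (vscale t (vbasis i)))) c l.
Proof.
rewrite /has_partial => H eps He; have [d Hd] := H eps He; exists d => h Hh Hhd.
have E1 : vadd (vadd p (vscale c (vbasis i))) (vscale (0 + h) (vbasis i)) =
   vadd p (vscale (c + h) (vbasis i)).
  apply: vec_eq => j; rewrite /vadd /vscale; ring.
have E2 : vadd (vadd p (vscale c (vbasis i))) (vscale 0 (vbasis i)) =
   vadd p (vscale c (vbasis i)).
  apply: vec_eq => j; rewrite /vadd /vscale; ring.
by have := Hd h Hh Hhd; rewrite E1 E2.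
Qed.

Lemma partial_at0 n (g : vec n -> R) i (p : vec n) c l :
  derivable_pt_lim (fun t => g (vadd p (vscale t (vbasis i)))) c l ->
  has_partial g i (vadd p (vscale c (vbasis i))) l.
Proof.
rewrite /has_partial => H eps He; have [d Hd] := H eps He; exists d => h Hh Hhd.
have E1 : vadd (vadd p (vscale c (vbasis i))) (vscale (0 + h) (vbasis i)) =
   vadd p (vscale (c + h) (vbasis i)).
  apply: vec_eq => j; rewrite /vadd /vscale; ring.
have E2 : vadd (vadd p (vscale c (vbasis i))) (vscale 0 (vbasis i)) =
   vadd p (vscale c (vbasis i)).
  apply: vec_eq => j; rewrite /vadd /vscale; ring.
by rewrite E1 E2; apply: Hd.
Qed.

Lemma vadd_scale0 n (p : vec n) w : vadd p (vscale 0 w) = p.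
Proof. apply: vec_eq => j; rewrite /vadd /vscale; ring. Qed.

Lemma mvt_line n (g : vec n -> R) (Dg : vec n -> vec n) (p : vec n) i a :
  (forall y, is_grad g y (Dg y)) ->
  exists c, Rabs c <= Rabs a /\
    g (vadd p (vscale a (vbasis i))) - g p = Dg (vadd p (vscale c (vbasis i))) i * a.
Proof.
move=> Hg.
have Hd : forall c, derivable_pt_lim (fun t => g (vadd p (vscale t (vbasis i)))) c
                      (Dg (vadd p (vscale c (vbasis i))) i).
  move=> c; apply: partial_at; exact: Hg.
case: (Rtotal_order a 0) => [Ha|[Ha|Ha]].
- have [c [Hc1 Hc2]] := MVT_cor2 _ _ a 0 Ha (fun c _ => Hd c).
  exists c; split; first by rewrite !Rabs_left1; lra.
  rewrite vadd_scale0 in Hc1; lra.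
- exists 0; split; first (rewrite Ha; lra).
  by rewrite Ha vadd_scale0; ring.
- have [c [Hc1 Hc2]] := MVT_cor2 _ _ 0 a Ha (fun c _ => Hd c).
  exists c; split; first by rewrite !Rabs_right; lra.
  rewrite vadd_scale0 in Hc1; lra.
Qed.

Definition trunc {n} (h : vec n) (k : nat) : vec n :=
  fun i => if (i < k)%N then h i else 0.

Lemma frechet_C1 n (g : vec n -> R) (Dg : vec n -> vec n) (x : V n) :
  (forall y, is_grad g y (Dg y)) ->
  (forall i, continuous (fun y : V n => Dg y i) x) -> frechet g x (Dg x).
Proof.
move=> Hg Hc eps He.
have : locally x (fun y : V n => forall i, Rabs (Dg y i - Dg x i) < eps).
  apply: (filter_forall_fin (locally x) n (fun i y => Rabs (Dg y i - Dg x i) < eps)) => i.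
  by move: (Hc i) => /filterlim_locally /(_ (mkposreal _ He)).
case=> d Hd; exists d; split; first exact: cond_pos.
move=> h Hh.
have main : forall k, Rabs (g (vadd x (trunc h k)) - g x - vsum (fun i => Dg x i * trunc h k i))
     <= eps * vsum (fun i => Rabs (trunc h k i)).
  elim=> [|k IH].
    have E : trunc h 0 = vzero by apply: vec_eq => i; rewrite /trunc ltn0.
    rewrite E (vsum_ext _ (fun _ => 0)); last by move=> i; rewrite /vzero; ring.
    rewrite (vsum_ext (fun i => Rabs (vzero i)) (fun _ => 0)); last by move=> i; rewrite /vzero Rabs_R0.
    have -> : vadd x vzero = x by apply: vec_eq => i; rewrite /vadd /vzero; ring.
    rewrite vsum_zero; have -> : g x - g x - 0 = 0 by ring.
    rewrite Rabs_R0; lra.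
  case: (ltnP k n) => Hk; last first.
    have E : trunc h k.+1 = trunc h k.
      apply: vec_eq => i; rewrite /trunc.
      have Hi := ltn_ord i.
      have -> : (i < k.+1)%N = true by apply: (leq_trans Hi); apply: leqW.
      by have -> : (i < k)%N = true by apply: (leq_trans Hi).
    by rewrite E.
  set i0 := Ordinal Hk.
  have ET : forall i, trunc h k.+1 i = trunc h k i + h i0 * vbasis i0 i.
    move=> i; rewrite /trunc /vbasis ltnS.
    have Hne : (nat_of_ord i != k) -> (i == i0) = false.
      move=> H; apply/negbTE; apply: contra H => /eqP ->; by [].
    case: (ltngtP i k) => Hik.
    - rewrite Hne; [ring| by rewrite neq_ltn Hik].
    - rewrite Hne; [ring| by rewrite neq_ltn Hik orbT].
    - have Ei : i = i0 by apply: val_inj.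
      rewrite Ei eqxx; ring.
  set p := vadd x (trunc h k).
  have [c [Hc1 Hc2]] := mvt_line _ g Dg p i0 (h i0) Hg.
  have E1 : vadd x (trunc h k.+1) = vadd p (vscale (h i0) (vbasis i0)).
    apply: vec_eq => i; rewrite /p /vadd /vscale ET; ring.
  have Eball : Rabs (Dg (vadd p (vscale c (vbasis i0))) i0 - Dg x i0) < eps.
    apply: Hd => j; apply/ball_R; rewrite /p /vadd /vscale /vbasis.
    have -> : x j + trunc h k j + c * (if j == i0 then 1 else 0) - x j =
              trunc h k j + c * (if j == i0 then 1 else 0) by ring.
    case: (eqVneq j i0) => [->|Nj].
      have -> : trunc h k i0 = 0 by rewrite /trunc /= ltnn.
      rewrite Rmult_1_r Rplus_0_l; have := Hh i0; lra.
    rewrite /trunc; case: (j < k)%N; have := Hh j; have := Rabs_pos (h j);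
      rewrite ?Rmult_0_r ?Rplus_0_r ?Rabs_R0; lra.
  rewrite E1 (vsum_ext _ (fun i => Dg x i * trunc h k i + Dg x i * h i0 * vbasis i0 i));
    last by move=> i; rewrite ET; ring.
  rewrite vsum_add (vsum_ext (fun i => Dg x i * h i0 * vbasis i0 i)
      (fun i => vbasis i0 i * (Dg x i * h i0))); last by move=> i; ring.
  rewrite vsum_delta.
  rewrite (vsum_ext (fun i => Rabs (trunc h k.+1 i))
      (fun i => Rabs (trunc h k i) + vbasis i0 i * Rabs (h i0))); last first.
    move=> i; rewrite ET /vbasis /trunc; case: (eqVneq i i0) => [Ei|Ni].
      rewrite Ei /= ltnn Rmult_1_r Rmult_1_l Rplus_0_l Rabs_R0 Rplus_0_l //.
    rewrite Rmult_0_r Rmult_0_l !Rplus_0_r //.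
  rewrite vsum_add vsum_delta.
  have -> : g (vadd p (vscale (h i0) (vbasis i0))) - g x -
     (vsum (fun i => Dg x i * trunc h k i) + Dg x i0 * h i0) =
     (g p - g x - vsum (fun i => Dg x i * trunc h k i)) +
     (Dg (vadd p (vscale c (vbasis i0))) i0 - Dg x i0) * h i0 by lra.
  apply: Rle_trans (Rabs_triang _ _) _; rewrite Rabs_mult.
  have := Rabs_pos (h i0); move=> Hp.
  have : Rabs (Dg (vadd p (vscale c (vbasis i0))) i0 - Dg x i0) * Rabs (h i0) <= eps * Rabs (h i0)
    by apply: Rmult_le_compat_r => //; lra.
  rewrite /p in IH *; lra.
have Et : trunc h n = h by apply: vec_eq => i; rewrite /trunc ltn_ord.
by have := main n; rewrite Et.
Qed.

Lemma locally_R0 (P : R -> Prop) : locally 0 P -> exists d, 0 < d /\ forall t, Rabs t < d -> P t.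
Proof.
case=> d Hd; exists d; split; first exact: cond_pos.
move=> t Ht; apply: Hd; apply/ball_R; by rewrite Rminus_0_r.
Qed.

Lemma chain n (g : vec n -> R) (y D : vec n) (Vf : R -> vec n) (V' : vec n) t0 :
  frechet g y D -> Vf t0 = y ->
  (forall k, derivable_pt_lim (fun t => Vf t k) t0 (V' k)) ->
  derivable_pt_lim (fun t => g (Vf t)) t0 (vsum (fun k => D k * V' k)).
Proof.
move=> Hf Ey Hd eps He.
set A := vsum (fun k => Rabs (V' k) + 1).
set B := vsum (fun k => Rabs (D k)) + 1.
have HA : 0 <= A by apply: vsum_ge0 => k; have := Rabs_pos (V' k); lra.
have HB : 1 <= B by have := vsum_ge0 _ (fun k => Rabs_pos (D k)); rewrite /B; lra.
have He1 : 0 < eps / (2 * (A + 1)) by apply: Rdiv_lt_0_compat; lra.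
have [d1 [Hd1 Hf1]] := Hf _ He1.
have He2 : 0 < Rmin 1 (eps / (2 * B)) by apply: Rmin_pos; [lra| apply: Rdiv_lt_0_compat; lra].
set e2 := Rmin 1 (eps / (2 * B)).
have Hloc : locally 0 (fun tau => forall k, tau <> 0 ->
     Rabs ((Vf (t0 + tau) k - Vf t0 k) / tau - V' k) < e2 /\
     Rabs (Vf (t0 + tau) k - Vf t0 k) < d1).
  apply: (filter_forall_fin (locally 0) n (fun k tau => tau <> 0 ->
     Rabs ((Vf (t0 + tau) k - Vf t0 k) / tau - V' k) < e2 /\
     Rabs (Vf (t0 + tau) k - Vf t0 k) < d1)) => k.
  have Hq : 0 < d1 / (Rabs (V' k) + 1) by apply: Rdiv_lt_0_compat => //; have := Rabs_pos (V' k); lra.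
  have [dk Hdk] := Hd k e2 He2.
  exists (mkposreal _ (Rmin_pos _ _ (cond_pos dk) Hq)) => tau /ball_R Ht Htau.
  rewrite Rminus_0_r /= in Ht.
  have Ht1 : Rabs tau < dk by apply: Rlt_le_trans Ht _; apply: Rmin_l.
  have Ht2 : Rabs tau < d1 / (Rabs (V' k) + 1) by apply: Rlt_le_trans Ht _; apply: Rmin_r.
  have H1 := Hdk tau Htau Ht1; split => //.
  have E : Vf (t0 + tau) k - Vf t0 k = tau * ((Vf (t0 + tau) k - Vf t0 k) / tau) by field.
  rewrite E Rabs_mult.
  have : Rabs ((Vf (t0 + tau) k - Vf t0 k) / tau) <= Rabs (V' k) + 1.
    have := Rabs_triang_inv ((Vf (t0 + tau) k - Vf t0 k) / tau) (V' k).
    have : e2 <= 1 by apply: Rmin_l. lra.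
  move=> Hq2; have := Rabs_pos tau; have := Rabs_pos ((Vf (t0 + tau) k - Vf t0 k) / tau); move=> P1 P2.
  apply: (Rle_lt_trans _ (Rabs tau * (Rabs (V' k) + 1))); first by apply: Rmult_le_compat_l.
  have Hp : 0 < Rabs (V' k) + 1 by have := Rabs_pos (V' k); lra.
  have := Rmult_lt_compat_r _ _ _ Hp Ht2.
  by rewrite /Rdiv Rmult_assoc Rinv_l ?Rmult_1_r; lra.
have [d [Hd0 Hdd]] := locally_R0 _ Hloc.
exists (mkposreal _ Hd0) => tau Htau Ht /=.
have Ht' := Hdd tau Ht.
set h : vec n := fun k => Vf (t0 + tau) k - Vf t0 k.
have Eh : Vf (t0 + tau) = vadd y h by rewrite -Ey; apply: vec_eq => k; rewrite /vadd /h; ring.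
have Hh : forall i, Rabs (h i) < d1 by move=> i; case: (Ht' i Htau).
have Hfr := Hf1 h Hh.
rewrite Eh Ey.
set q : vec n := fun k => h k / tau.
have E1 : (g (vadd y h) - g y) / tau - vsum (fun k => D k * V' k) =
   (g (vadd y h) - g y - vsum (fun i => D i * h i)) / tau + vsum (fun k => D k * (q k - V' k)).
  rewrite (vsum_ext (fun k => D k * (q k - V' k)) (fun k => D k * h k * / tau - D k * V' k));
    last by move=> k; rewrite /q /Rdiv; ring.
  rewrite vsum_sub vsum_scalr; field; exact Htau.
rewrite E1; apply: Rle_lt_trans (Rabs_triang _ _) _.
have Hat : 0 < Rabs tau by apply: Rabs_pos_lt.
have T1 : Rabs ((g (vadd y h) - g y - vsum (fun i => D i * h i)) / tau) <= eps / (2 * (A + 1)) * A.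
  rewrite Rabs_div //.
  apply: (Rle_trans _ (eps / (2 * (A + 1)) * vsum (fun i => Rabs (h i)) / Rabs tau)).
    rewrite /Rdiv; apply: Rmult_le_compat_r; [left; apply: Rinv_0_lt_compat => //| exact Hfr].
  rewrite /Rdiv Rmult_assoc -vsum_scalr; apply: Rmult_le_compat_l; first lra.
  apply: vsum_le => k.
  have := Rabs_triang_inv (q k) (V' k); have := proj1 (Ht' k Htau); rewrite -/(h k) -/(q k).
  have : e2 <= 1 by apply: Rmin_l.
  rewrite /q Rabs_div // /Rdiv; lra.
have T2 : Rabs (vsum (fun k => D k * (q k - V' k))) <= (B - 1) * e2.
  apply: Rle_trans (vsum_abs _) _; rewrite /B.
  have -> : vsum (fun k => Rabs (D k)) + 1 - 1 = vsum (fun k => Rabs (D k)) by ring.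
  rewrite -vsum_scalr; apply: vsum_le => k; rewrite Rabs_mult.
  apply: Rmult_le_compat_l; first exact: Rabs_pos.
  have := proj1 (Ht' k Htau); rewrite -/(h k) -/(q k); lra.
have T1' : eps / (2 * (A + 1)) * A < eps / 2.
  have -> : eps / (2 * (A + 1)) * A = eps / 2 * (A / (A + 1)) by field; lra.
  have : A / (A + 1) < 1.
    apply: (Rmult_lt_reg_r (A + 1)); first lra. rewrite /Rdiv Rmult_assoc Rinv_l; lra.
  nra.
have T2' : (B - 1) * e2 < eps / 2.
  have : e2 <= eps / (2 * B) by apply: Rmin_r.
  have : 0 < eps / (2 * B) by apply: Rdiv_lt_0_compat; lra.
  have -> : eps / 2 = B * (eps / (2 * B)) by field; lra.
  nra.
lra.
Qed.

Lemma frechet_cont n (g : vec n -> R) y D : frechet g y D -> continuous (g : V n -> R) y.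
Proof.
move=> Hf; apply/filterlim_locally => eps.
have [d [Hd Hfd]] := Hf 1 Rlt_0_1.
set S := vsum (fun i => Rabs (D i)) + INR n + 1.
have HS : 1 <= S by have := vsum_ge0 _ (fun k => Rabs_pos (D k)); have := pos_INR n; rewrite /S; lra.
have Hm : 0 < Rmin d (eps / S) by apply: Rmin_pos => //; apply: Rdiv_lt_0_compat; [exact: cond_pos|lra].
exists (mkposreal _ Hm) => z Hz; apply/ball_R.
set h : vec n := fun i => z i - y i.
have Ez : z = vadd y h by apply: vec_eq => i; rewrite /vadd /h Rplus_minus.
have Hh : forall i, Rabs (h i) < Rmin d (eps / S) by move=> i; exact: (Hz i).
have Hh1 : forall i, Rabs (h i) < d by move=> i; apply: Rlt_le_trans (Hh i) (Rmin_l _ _).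
have := Hfd h Hh1; rewrite -Ez => H1.
have H2 : Rabs (vsum (fun i => D i * h i)) <= vsum (fun i => Rabs (D i)) * Rmin d (eps / S).
  apply: Rle_trans (vsum_abs _) _; rewrite -vsum_scalr; apply: vsum_le => i; rewrite Rabs_mult.
  apply: Rmult_le_compat_l; [exact: Rabs_pos| left; exact: Hh].
have H3 : vsum (fun i => Rabs (h i)) <= INR n * Rmin d (eps / S).
  rewrite -vsum_const; apply: vsum_le => i; left; exact: Hh.
have H4 : Rabs (g z - g y) <= S * Rmin d (eps / S) - Rmin d (eps / S).
  have := Rabs_triang (g z - g y - vsum (fun i => D i * h i)) (vsum (fun i => D i * h i)).
  have -> : g z - g y - vsum (fun i => D i * h i) + vsum (fun i => D i * h i) = g z - g y by ring.
  move=> T; rewrite /S in H2 H3 *; lra.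
have H5 : S * Rmin d (eps / S) <= eps.
  have := Rmin_r d (eps / S) => H; have : S * Rmin d (eps / S) <= S * (eps / S) by apply: Rmult_le_compat_l; lra.
  have -> : S * (eps / S) = eps by field; lra. done.
have := cond_pos (mkposreal _ Hm) => /= H6; lra.
Qed.

Lemma grad_unique n (g : vec n -> R) x v w : is_grad g x v -> is_grad g x w -> v = w.
Proof. move=> H1 H2; apply: vec_eq => i; exact: uniqueness_limite (H1 i) (H2 i). Qed.

Lemma dlin a b t0 : derivable_pt_lim (fun t => a + t * b) t0 b.
Proof. apply/is_derive_Reals; auto_derive => //; ring. Qed.

Lemma line_deriv n (g : vec n -> R) (Dg : vec n -> vec n) (x w : vec n) t0 :
  (forall y, is_grad g y (Dg y)) -> (forall i, continuous (fun y : V n => Dg y i) (vadd x (vscale t0 w))) ->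
  derivable_pt_lim (fun t => g (vadd x (vscale t w))) t0
     (vsum (fun k => Dg (vadd x (vscale t0 w)) k * w k)).
Proof.
move=> Hg Hc; apply: (chain _ g _ _ (fun t => vadd x (vscale t w))) => //.
  exact: frechet_C1.
move=> k; rewrite /vadd /vscale; exact: dlin.
Qed.


Definition C2data {n} (g : vec n -> R) (Dg : vec n -> vec n) (D2g : vec n -> 'I_n -> 'I_n -> R) :=
  (forall y, is_grad g y (Dg y)) /\
  (forall y i j, has_partial (fun z => Dg z i) j y (D2g y i j)) /\
  (forall i (y : V n), continuous (fun z : V n => Dg z i) y) /\
  (forall i j (y : V n), continuous (fun z : V n => D2g z i j) y).

Lemma C2fun_data n (g : vec n -> R) : C2fun g -> exists Dg D2g, C2data g Dg D2g.
Proof.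
case=> Dg [D2g [H1 [H2 [H3 H4]]]]; exists Dg, D2g; split => //; split => //; split.
- move=> i; exact: vcont_to.
- move=> i j; exact: vcont_to.
Qed.

Lemma data_C2fun n (g : vec n -> R) Dg D2g : C2data g Dg D2g -> C2fun g.
Proof.
case=> H1 [H2 [H3 H4]]; exists Dg, D2g; split => //; split => //; split.
- move=> i; apply: vcont_from; exact: H3.
- move=> i j; apply: vcont_from; exact: H4.
Qed.

Lemma dsum n (h : 'I_n -> R -> R) (l : 'I_n -> R) t0 :
  (forall k, derivable_pt_lim (h k) t0 (l k)) ->
  derivable_pt_lim (fun t => vsum (fun k => h k t)) t0 (vsum l).
Proof.
move=> H; rewrite /vsum.
have : forall s : seq 'I_n, derivable_pt_lim (fun t => \big[Rplus/0]_(k <- s) h k t) t0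
           (\big[Rplus/0]_(k <- s) l k).
  elim=> [|a s IH].
    rewrite big_nil; have -> : (fun t => \big[Rplus/0]_(k <- [::]) h k t) = fun _ => 0.
      by apply: functional_extensionality => t; rewrite big_nil.
    exact: derivable_pt_lim_const.
  rewrite big_cons; have -> : (fun t => \big[Rplus/0]_(k <- a :: s) h k t) =
     fun t => h a t + \big[Rplus/0]_(k <- s) h k t.
    by apply: functional_extensionality => t; rewrite big_cons.
  exact: derivable_pt_lim_plus (H a) IH.
exact.
Qed.

Lemma dmulc (h : R -> R) l c t0 : derivable_pt_lim h t0 l ->
  derivable_pt_lim (fun t => h t * c) t0 (l * c).
Proof.
move=> H; have := derivable_pt_lim_mult h (fun _ => c) t0 l 0 H (derivable_pt_lim_const c t0).
rewrite /mult_fct Rmult_0_r Rplus_0_r; exact.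
Qed.

Lemma line_d1 n (g : vec n -> R) Dg D2g (x w : vec n) t0 : C2data g Dg D2g ->
  derivable_pt_lim (fun t => g (vadd x (vscale t w))) t0
     (vsum (fun k => Dg (vadd x (vscale t0 w)) k * w k)).
Proof. case=> H1 [H2 [H3 H4]]; apply: line_deriv => //; move=> i; exact: H3. Qed.

Lemma line_d2 n (g : vec n -> R) Dg D2g (x w : vec n) t0 : C2data g Dg D2g ->
  derivable_pt_lim (fun t => vsum (fun k => Dg (vadd x (vscale t w)) k * w k)) t0
     (vsum (fun k => mat_app (D2g (vadd x (vscale t0 w))) w k * w k)).
Proof.
case=> H1 [H2 [H3 H4]]; apply: dsum => k; apply: dmulc.
apply: (line_deriv _ (fun z => Dg z k) (fun y j => D2g y k j)).
- move=> y j; exact: H2.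
- move=> j; exact: H4.
Qed.

Definition convex1 (q : R -> R) := forall a b t, 0 <= t <= 1 ->
  q (t * a + (1 - t) * b) <= t * q a + (1 - t) * q b.

Lemma deriv_nonneg (p : R -> R) s l :
  (forall a b, a < b -> p a <= p b) -> derivable_pt_lim p s l -> 0 <= l.
Proof.
move=> Hm Hd; apply: Rnot_lt_le => Hl.
have [d Hd'] := Hd (- l) ltac:(lra).
have Hd2 : 0 < d / 2 by have := cond_pos d; lra.
have := Hd' (d / 2) ltac:(lra) ltac:(rewrite Rabs_right; have := cond_pos d; lra).
have := Hm s (s + d / 2) ltac:(lra) => H1.
have : 0 <= (p (s + d / 2) - p s) / (d / 2) by apply: Rdiv_le_0_compat; lra.
move=> H2 H3; have := Rle_abs ((p (s + d / 2) - p s) / (d / 2) - l); lra.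
Qed.

Lemma convex_deriv_mono (q q' : R -> R) :
  convex1 q -> (forall s, derivable_pt_lim q s (q' s)) ->
  forall s t, s < t -> q' s <= q' t.
Proof.
move=> Hc Hd s t Hst.
set m := (q t - q s) / (t - s).
have A : q' s <= m.
  apply: Rnot_lt_le => Hlt.
  have [d Hd'] := Hd s (q' s - m) ltac:(lra).
  set h := Rmin (d / 2) ((t - s) / 2).
  have Hh : 0 < h by apply: Rmin_pos; have := cond_pos d; lra.
  have Hh1 : h <= d / 2 by apply: Rmin_l.
  have Hh2 : h <= (t - s) / 2 by apply: Rmin_r.
  have := Hd' h ltac:(lra) ltac:(rewrite Rabs_right; have := cond_pos d; lra).
  have Hl : 0 <= h / (t - s) <= 1.
    split; first (apply: Rdiv_le_0_compat; lra).
    apply: (Rmult_le_reg_r (t - s)); first lra.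
    rewrite /Rdiv Rmult_assoc Rinv_l; lra.
  have := Hc t s (h / (t - s)) Hl.
  have -> : h / (t - s) * t + (1 - h / (t - s)) * s = s + h by field; lra.
  move=> Hcv.
  have : (q (s + h) - q s) / h <= m.
    rewrite /m; apply: (Rmult_le_reg_r h) => //.
    have -> : (q (s + h) - q s) / h * h = q (s + h) - q s by field; lra.
    have -> : (q t - q s) / (t - s) * h = h / (t - s) * q t - h / (t - s) * q s by field; lra.
    lra.
  move=> H1 H2; have [H3 H4] := Rabs_def2 _ _ H2; lra.
have B : m <= q' t.
  apply: Rnot_lt_le => Hlt.
  have [d Hd'] := Hd t (m - q' t) ltac:(lra).
  set h := Rmin (d / 2) ((t - s) / 2).
  have Hh : 0 < h by apply: Rmin_pos; have := cond_pos d; lra.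
  have Hh1 : h <= d / 2 by apply: Rmin_l.
  have Hh2 : h <= (t - s) / 2 by apply: Rmin_r.
  have := Hd' (- h) ltac:(lra) ltac:(rewrite Rabs_left; have := cond_pos d; lra).
  have Hl : 0 <= h / (t - s) <= 1.
    split; first (apply: Rdiv_le_0_compat; lra).
    apply: (Rmult_le_reg_r (t - s)); first lra.
    rewrite /Rdiv Rmult_assoc Rinv_l; lra.
  have := Hc s t (h / (t - s)) Hl.
  have -> : h / (t - s) * s + (1 - h / (t - s)) * t = t + - h by field; lra.
  move=> Hcv.
  have : m <= (q (t + - h) - q t) / - h.
    rewrite /m; apply: (Rmult_le_reg_r h) => //.
    have -> : (q (t + - h) - q t) / - h * h = q t - q (t + - h) by field; lra.
    have -> : (q t - q s) / (t - s) * h = h / (t - s) * q t - h / (t - s) * q s by field; lra.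
    lra.
  move=> H1 H2; have [H3 H4] := Rabs_def2 _ _ H2; lra.
lra.
Qed.

Lemma mono_of_deriv (p p' : R -> R) :
  (forall s, derivable_pt_lim p s (p' s)) -> (forall s, 0 <= p' s) ->
  forall a b, a < b -> p a <= p b.
Proof.
move=> Hd Hp a b Hab; have [c [Hc _]] := MVT_cor2 p p' a b Hab (fun c _ => Hd c).
have := Hp c; nra.
Qed.

Lemma convex_of_mono (p p' : R -> R) t :
  (forall s, derivable_pt_lim p s (p' s)) -> (forall a b, a < b -> p' a <= p' b) ->
  0 <= t <= 1 -> p t <= t * p 1 + (1 - t) * p 0.
Proof.
move=> Hd Hm Ht.
case: (Req_dec t 0) => [->|H0]; first lra.
case: (Req_dec t 1) => [->|H1]; first lra.
have [c1 [E1 Hc1]] := MVT_cor2 p p' 0 t ltac:(lra) (fun c _ => Hd c).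
have [c2 [E2 Hc2]] := MVT_cor2 p p' t 1 ltac:(lra) (fun c _ => Hd c).
have := Hm c1 c2 ltac:(lra) => Hle.
have : 0 <= t * (1 - t) by nra.
nra.
Qed.

Definition qf {n} (H : 'I_n -> 'I_n -> R) (w : vec n) := vsum (fun k => mat_app H w k * w k).

Lemma psd_of_convex n (g : vec n -> R) Dg D2g : convex g -> C2data g Dg D2g ->
  forall x w, 0 <= qf (D2g x) w.
Proof.
move=> Hc Hdat x w.
set q := fun t => g (vadd x (vscale t w)).
set q' := fun t => vsum (fun k => Dg (vadd x (vscale t w)) k * w k).
have Hq : forall s, derivable_pt_lim q s (q' s) by move=> s; exact: line_d1 Hdat.
have Hcv : convex1 q.
  move=> a b t Ht; rewrite /q.
  have -> : vadd x (vscale (t * a + (1 - t) * b) w) =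
     vadd (vscale t (vadd x (vscale a w))) (vscale (1 - t) (vadd x (vscale b w))).
    apply: vec_eq => i; rewrite /vadd /vscale; ring.
  exact: Hc.
have Hm := convex_deriv_mono q q' Hcv Hq.
have := line_d2 _ g Dg D2g x w 0 Hdat.
rewrite vadd_scale0 => Hd2.
exact: deriv_nonneg Hm Hd2.
Qed.

Lemma convex_of_psd n (g : vec n -> R) Dg D2g : C2data g Dg D2g ->
  (forall x w, 0 <= qf (D2g x) w) -> convex g.
Proof.
move=> Hdat Hpsd x y t Ht.
set w := vadd x (vscale (-1) y).
set p := fun s => g (vadd y (vscale s w)).
set p' := fun s => vsum (fun k => Dg (vadd y (vscale s w)) k * w k).
have Hp : forall s, derivable_pt_lim p s (p' s) by move=> s; exact: line_d1 Hdat.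
have Hp2 : forall s, derivable_pt_lim p' s (qf (D2g (vadd y (vscale s w))) w).
  move=> s; exact: line_d2 Hdat.
have Hm := mono_of_deriv p' _ Hp2 (fun s => Hpsd _ w).
have := convex_of_mono p p' t Hp Hm Ht.
rewrite /p.
have -> : vadd y (vscale t w) = vadd (vscale t x) (vscale (1 - t) y).
  apply: vec_eq => i; rewrite /w /vadd /vscale; ring.
have -> : vadd y (vscale 1 w) = x by apply: vec_eq => i; rewrite /w /vadd /vscale; ring.
by rewrite vadd_scale0.
Qed.

Lemma c2d_comp n (Q : R -> R -> vec n) (h : vec n -> R) a b :
  (forall k, continuity_2d_pt (fun u v => Q u v k) a b) ->
  continuous (h : V n -> R) (Q a b) -> continuity_2d_pt (fun u v => h (Q u v)) a b.
Proof.
move=> HQ Hh; apply/continuity_2d_pt_filterlim.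
apply: (filterlim_comp _ _ _ (fun z : R * R => (Q z.1 z.2 : V n)) h); last exact: Hh.
apply: (cV_of n (fun z : R * R => (Q z.1 z.2 : V n)) (a, b)) => k.
by move: (HQ k) => /continuity_2d_pt_filterlim.
Qed.

Lemma c2d_lin (c p q : R) a b : continuity_2d_pt (fun u v => c + u * p + v * q) a b.
Proof.
apply: continuity_2d_pt_plus; first apply: continuity_2d_pt_plus.
- exact: continuity_2d_pt_const.
- apply: continuity_2d_pt_mult; [exact: continuity_2d_pt_id1| exact: continuity_2d_pt_const].
- apply: continuity_2d_pt_mult; [exact: continuity_2d_pt_id2| exact: continuity_2d_pt_const].
Qed.

Lemma hess_sym n (g : vec n -> R) Dg D2g : C2data g Dg D2g ->
  forall x i j, D2g x i j = D2g x j i.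
Proof.
case=> H1 [H2 [H3 H4]] x i j.
set P := fun a b => vadd (vadd x (vscale a (vbasis i))) (vscale b (vbasis j)).
set f2 := fun a b => g (P a b).
have EP1 : forall a b, P a b = vadd (vadd x (vscale b (vbasis j))) (vscale a (vbasis i)).
  move=> a b; apply: vec_eq => k; rewrite /P /vadd /vscale; ring.
have EP2 : forall a b, P a b = vadd (vadd x (vscale a (vbasis i))) (vscale b (vbasis j)) by [].
have D1 : forall a b, is_derive (fun z => f2 z b) a (Dg (P a b) i).
  move=> a b; apply/is_derive_Reals.
  have -> : (fun z => f2 z b) = fun z => g (vadd (vadd x (vscale b (vbasis j))) (vscale z (vbasis i))).
    by apply: functional_extensionality => z; rewrite /f2 EP1.
  apply: partial_at; rewrite -EP1; exact: H1.
have D2 : forall a b, is_derive (fun z => f2 a z) b (Dg (P a b) j).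
  move=> a b; apply/is_derive_Reals; rewrite /f2 /P.
  apply: partial_at; rewrite -EP2; exact: H1.
have E1 : forall b, (fun z => Derive (fun t => f2 t z) b) = fun z => Dg (P b z) i.
  move=> b; apply: functional_extensionality => z; exact: is_derive_unique (D1 b z).
have E2 : forall a, (fun z => Derive (fun t => f2 z t) a) = fun z => Dg (P z a) j.
  move=> a; apply: functional_extensionality => z; exact: is_derive_unique (D2 z a).
have DD1 : forall a b, is_derive (fun z => Dg (P a z) i) b (D2g (P a b) i j).
  move=> a b; apply/is_derive_Reals; rewrite /P.
  apply: (partial_at _ (fun y => Dg y i)); rewrite -EP2; exact: H2.
have DD2 : forall a b, is_derive (fun z => Dg (P z b) j) a (D2g (P a b) j i).
  move=> a b; apply/is_derive_Reals.
  have -> : (fun z => Dg (P z b) j) =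
     fun z => Dg (vadd (vadd x (vscale b (vbasis j))) (vscale z (vbasis i))) j.
    by apply: functional_extensionality => z; rewrite EP1.
  apply: (partial_at _ (fun y => Dg y j)); rewrite -EP1; exact: H2.
have S := Schwarz f2 0 0.
rewrite E2 E1 (is_derive_unique _ _ _ (DD2 0 0)) (is_derive_unique _ _ _ (DD1 0 0)) in S.
have EP0 : P 0 0 = x by apply: vec_eq => k; rewrite /P /vadd /vscale; ring.
rewrite EP0 in S; symmetry; apply: S.
- exists (mkposreal _ Rlt_0_1) => u v _ _; split; [|split; [|split]].
  + eexists; exact: D1.
  + eexists; exact: D2.
  + rewrite E2; eexists; exact: DD2.
  + rewrite E1; eexists; exact: DD1.
- apply: (continuity_2d_pt_ext (fun u v => D2g (P u v) j i)).
    move=> u v; by rewrite E2 (is_derive_unique _ _ _ (DD2 u v)).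
  apply: (c2d_comp _ P (fun y => D2g y j i)); last exact: H4.
  move=> k; rewrite /P /vadd /vscale; exact: c2d_lin.
- apply: (continuity_2d_pt_ext (fun u v => D2g (P u v) i j)).
    move=> u v; by rewrite E1 (is_derive_unique _ _ _ (DD1 u v)).
  apply: (c2d_comp _ P (fun y => D2g y i j)); last exact: H4.
  move=> k; rewrite /P /vadd /vscale; exact: c2d_lin.
Qed.


Lemma dext (f g : R -> R) x l : (forall t, f t = g t) -> derivable_pt_lim f x l -> derivable_pt_lim g x l.
Proof. move=> H; have -> : g = f by apply: functional_extensionality => t; rewrite H. done. Qed.

Lemma dval (f : R -> R) x l l' : l = l' -> derivable_pt_lim f x l -> derivable_pt_lim f x l'.
Proof. by move=> ->. Qed.

Definition Psi {n} (G : R -> R) (v : vec n) : vec n := vscale (G (vnorm v) / vnorm v) v.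

Definition DPsi {n} (G G' : R -> R) (v : vec n) (i k : 'I_n) : R :=
  if Req_EM_T (vnorm v) 0 then G' 0 * vbasis k i
  else G (vnorm v) / vnorm v * vbasis k i +
       (G' (vnorm v) - G (vnorm v) / vnorm v) * (v i * v k) / (vnorm v * vnorm v).

Lemma vnorm_basis n (k : 'I_n) : vnorm (vbasis k) = 1.
Proof.
rewrite /vnorm (vsum_delta k (vbasis k)) /vbasis eqxx; exact: sqrt_1.
Qed.

Lemma vbasis_le1 n (k i : 'I_n) : Rabs (vbasis k i) <= 1.
Proof. rewrite /vbasis; case: (i == k); rewrite ?Rabs_R1 ?Rabs_R0; lra. Qed.

Section PsiSec.
Variables (G G' : R -> R).
Hypothesis HG : forall s, derivable_pt_lim G s (G' s).
Hypothesis HG' : continuity G'.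
Hypothesis HG0 : G 0 = 0.

Lemma Psi_partial n (v : vec n) i k :
  has_partial (fun w => Psi G w i) k v (DPsi G G' v i k).
Proof.
rewrite /has_partial /DPsi; case: (Req_EM_T (vnorm v) 0) => Hv; rewrite [is_left _]/=.
- have E := vnorm_eq0 v Hv; subst v.
  set c := vbasis k i.
  have Ef : forall t, Psi G (vadd vzero (vscale t (vbasis k))) i = G (Rabs t) / Rabs t * (t * c).
    move=> t; rewrite /Psi.
    have -> : vnorm (vadd vzero (vscale t (vbasis k))) = Rabs t.
      have -> : vadd vzero (vscale t (vbasis k)) = vscale t (vbasis k).
        apply: vec_eq => j; rewrite /vadd /vzero; ring.
      by rewrite vnorm_scale vnorm_basis Rmult_1_r.
    rewrite /vscale /vadd /vzero /c; ring.
  apply: (dext (fun t => G (Rabs t) / Rabs t * (t * c))); first by move=> t; rewrite Ef.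
  move=> eps He.
  have [d Hd] := HG 0 eps He.
  exists d => h Hh Hhd.
  have Hah : Rabs h <> 0 by apply: Rabs_no_R0.
  rewrite Rabs_R0 HG0 /Rdiv Rinv_0 !Rmult_0_l Rminus_0_r. rewrite Rplus_0_l.
  have -> : G (Rabs h) * / Rabs h * (h * c) * / h - G' 0 * c = c * (G (Rabs h) / Rabs h - G' 0).
    field; split => //.
  rewrite Rabs_mult.
  have := Hd (Rabs h) Hah ltac:(by rewrite Rabs_Rabsolu).
  rewrite Rplus_0_l HG0 Rminus_0_r => H1.
  have := vbasis_le1 _ k i; rewrite -/c => H2.
  have := Rabs_pos c; have := Rabs_pos (G (Rabs h) / Rabs h - G' 0); nra.
- set s := vnorm v.
  have Hs : 0 < s by case: (Rle_lt_or_eq_dec 0 s (vnorm_ge0 v)) => // H; exfalso; apply: Hv; rewrite -/s -H.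
  set c := vbasis k i.
  have EN : forall t, vnorm (vadd v (vscale t (vbasis k))) = sqrt (s * s + 2 * t * v k + t * t).
    move=> t; rewrite /vnorm; f_equal.
    rewrite (vsum_ext _ (fun m => v m * v m + (2 * t) * (vbasis k m * v m) +
                                 (t * t) * (vbasis k m * vbasis k m))); last first.
      by move=> m; rewrite /vadd /vscale; ring.
    rewrite !vsum_add !vsum_scal !vsum_delta -vnorm_sq /vbasis eqxx -/s; ring.
  have dP : derivable_pt_lim (fun t => s * s + 2 * t * v k + t * t) 0 (2 * v k).
    apply/is_derive_Reals; auto_derive => //; ring.
  have dN : derivable_pt_lim (fun t => vnorm (vadd v (vscale t (vbasis k)))) 0 (v k / s).
    apply: (dext (comp sqrt (fun t => s * s + 2 * t * v k + t * t))).
      by move=> t; rewrite EN.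
    apply: (dval _ _ (/ (2 * sqrt (s * s + 2 * 0 * v k + 0 * 0)) * (2 * v k))).
      have -> : s * s + 2 * 0 * v k + 0 * 0 = s * s by ring.
      rewrite sqrt_square; [field; lra | lra].
    apply: derivable_pt_lim_comp => //.
    apply: derivable_pt_lim_sqrt; nra.
  have N0 : vnorm (vadd v (vscale 0 (vbasis k))) = s by rewrite vadd_scale0.
  have dGN : derivable_pt_lim (fun t => G (vnorm (vadd v (vscale t (vbasis k))))) 0 (G' s * (v k / s)).
    apply: (dext (comp G (fun t => vnorm (vadd v (vscale t (vbasis k)))))) => //.
    apply: derivable_pt_lim_comp => //; rewrite N0; exact: HG.
  have dq : derivable_pt_lim (fun t => G (vnorm (vadd v (vscale t (vbasis k)))) /
                                        vnorm (vadd v (vscale t (vbasis k)))) 0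
              ((G' s * (v k / s) * s - v k / s * G s) / (s * s)).
    have := derivable_pt_lim_div _ _ _ _ _ dGN dN.
    rewrite N0 /Rsqr; apply => //; lra.
  have dl : derivable_pt_lim (fun t => v i + t * c) 0 c by exact: dlin.
  have := derivable_pt_lim_mult _ _ _ _ _ dq dl.
  rewrite /mult_fct /div_fct N0 => H.
  have H' : derivable_pt_lim (fun t => Psi G (vadd v (vscale t (vbasis k))) i) 0
      ((G' s * (v k / s) * s - v k / s * G s) / (s * s) * (v i + 0 * c) + G s / s * c).
    apply: (dext _ _ _ _ _ H) => t; by rewrite /Psi /vscale /vadd /c.
  apply: (dval _ _ _ _ _ H'); rewrite /c; field; lra.
Qed.
End PsiSec.

Lemma cont_coord n (v0 : V n) i : continuous (fun v : V n => v i) v0.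
Proof. exact: (cV_coord n (fun y : V n => y) v0 i (continuous_id v0)). Qed.

Lemma cont_vnorm n (v0 : V n) : continuous (fun v : V n => vnorm v) v0.
Proof.
rewrite /vnorm; apply: cR_sqrt; apply: (cR_vsum n (fun i (v : V n) => v i * v i)) => i.
apply: cR_mult; exact: cont_coord.
Qed.

Lemma cont_of_pt (h : R -> R) s : continuity_pt h s -> continuous h s.
Proof. by move/continuity_pt_filterlim. Qed.

Lemma locally_vnorm_pos n (v0 : V n) : vnorm v0 <> 0 -> locally v0 (fun v : V n => vnorm v <> 0).
Proof.
move=> H; have Hp : 0 < vnorm v0 / 2.
  case: (Rle_lt_or_eq_dec 0 _ (vnorm_ge0 v0)) => [|E]; [lra| by rewrite -E in H].
move: (cont_vnorm n v0) => /filterlim_locally /(_ (mkposreal _ Hp)).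
apply: filter_imp => v /ball_R /= Hb E; rewrite E in Hb.
have := Rabs_def2 _ _ Hb; lra.
Qed.

Lemma locally_vnorm_small n r : 0 < r -> locally (vzero : V n) (fun v : V n => vnorm v < r).
Proof.
move=> Hr; move: (cont_vnorm n vzero) => /filterlim_locally /(_ (mkposreal _ Hr)).
apply: filter_imp => v /ball_R /=; rewrite vnorm_zero Rminus_0_r => H.
have := Rle_abs (vnorm v); lra.
Qed.

Section PsiSec2.
Variables (G G' : R -> R).
Hypothesis HG : forall s, derivable_pt_lim G s (G' s).
Hypothesis HG' : continuity G'.
Hypothesis HG0 : G 0 = 0.

Lemma contG s : continuous G s.
Proof. apply: cont_of_pt; apply: derivable_continuous_pt; exists (G' s); exact: HG. Qed.

Lemma DPsi_cont n i k (v0 : V n) : continuous (fun v : V n => DPsi G G' v i k) v0.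
Proof.
case: (Req_EM_T (vnorm v0) 0) => Hv0.
- have E0 := vnorm_eq0 v0 Hv0.
  apply/filterlim_locally => eps.
  have He3 : 0 < eps / 3 by have := cond_pos eps; lra.
  have [d1 Hd1] := HG 0 (eps / 3) He3.
  have : locally 0 (fun s => ball (G' 0) (mkposreal _ He3) (G' s)).
    by move: (cont_of_pt G' 0 (HG' 0)) => /filterlim_locally; apply.
  case/locally_R0 => d2 [Hd2 Hd2'].
  have Hm : 0 < Rmin d1 d2 by apply: Rmin_pos => //; exact: cond_pos.
  rewrite E0; apply: filter_imp (locally_vnorm_small n _ Hm) => v Hv.
  apply/ball_R; rewrite /DPsi vnorm_zero.
  case: (Req_EM_T 0 0) => // _ /=.
  case: (Req_EM_T (vnorm v) 0) => Hv' /=.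
    rewrite Rminus_eq_0 Rabs_R0; exact: cond_pos.
  set s := vnorm v in Hv Hv' *.
  have Hs : 0 < s by case: (Rle_lt_or_eq_dec 0 s (vnorm_ge0 v)) => // H; exfalso; apply: Hv'; rewrite -H.
  have Hs1 : s < d1 by apply: Rlt_le_trans Hv (Rmin_l _ _).
  have Hs2 : s < d2 by apply: Rlt_le_trans Hv (Rmin_r _ _).
  have A1 : Rabs (G s / s - G' 0) < eps / 3.
    have := Hd1 s ltac:(lra) ltac:(rewrite Rabs_right; lra).
    by rewrite Rplus_0_l HG0 Rminus_0_r.
  have A2 : Rabs (G' s - G' 0) < eps / 3.
    have := Hd2' s ltac:(rewrite Rabs_right; lra); by move/ball_R.
  set r := v i * v k / (s * s).
  have Hr : Rabs r <= 1.
    rewrite /r Rabs_div; last by nra.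
    rewrite Rabs_mult (Rabs_right (s * s)); last by nra.
    apply: (Rmult_le_reg_r (s * s)); first nra.
    rewrite /Rdiv Rmult_assoc Rinv_l; last by nra.
    have := coord_le_vnorm v i; have := coord_le_vnorm v k; rewrite -/s => H1 H2.
    have := Rabs_pos (v i); have := Rabs_pos (v k); nra.
  have -> : G s / s * vbasis k i + (G' s - G s / s) * (v i * v k) / (s * s) - G' 0 * vbasis k i
         = (G s / s - G' 0) * vbasis k i + ((G' s - G' 0) - (G s / s - G' 0)) * r.
    rewrite /r; field; lra.
  clearbody r; apply: Rle_lt_trans (Rabs_triang _ _) _; rewrite !Rabs_mult.
  have := vbasis_le1 _ k i => Hc.
  have B : Rabs ((G' s - G' 0) - (G s / s - G' 0)) < 2 * (eps / 3).
    apply: Rle_lt_trans (Rabs_triang _ _) _; rewrite Rabs_Ropp; lra.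
  have P1 : Rabs (G s / s - G' 0) * Rabs (vbasis k i) <= Rabs (G s / s - G' 0).
    rewrite -{2}(Rmult_1_r (Rabs (G s / s - G' 0))); apply: Rmult_le_compat_l => //; exact: Rabs_pos.
  have P2 : Rabs ((G' s - G' 0) - (G s / s - G' 0)) * Rabs r <= Rabs ((G' s - G' 0) - (G s / s - G' 0)).
    rewrite -{2}(Rmult_1_r (Rabs ((G' s - G' 0) - (G s / s - G' 0)))).
    apply: Rmult_le_compat_l => //; exact: Rabs_pos.
  lra.
- set E := fun v : V n => G (vnorm v) / vnorm v * vbasis k i +
       (G' (vnorm v) - G (vnorm v) / vnorm v) * (v i * v k) / (vnorm v * vnorm v).
  have HE : continuous E v0.
    have cN := cont_vnorm n v0.
    have cG : continuous (fun v : V n => G (vnorm v)) v0 by apply: cR_comp => //; exact: contG.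
    have cG' : continuous (fun v : V n => G' (vnorm v)) v0.
      apply: cR_comp => //; apply: cont_of_pt; exact: HG'.
    have cI : continuous (fun v : V n => / vnorm v) v0 by exact: cR_inv.
    have ca : continuous (fun v : V n => G (vnorm v) / vnorm v) v0 by exact: cR_mult.
    apply: cR_plus.
      apply: cR_mult => //; exact: cR_const.
    apply: cR_mult; last first.
      apply: cR_inv; first exact: cR_mult.
      move=> H; apply: Hv0; nra.
    apply: cR_mult; first exact: cR_minus.
    apply: cR_mult; exact: cont_coord.
  apply: continuous_ext_loc HE.
  apply: filter_imp (locally_vnorm_pos n v0 Hv0) => v Hv.
  rewrite /DPsi /E; by case: (Req_EM_T (vnorm v) 0).
Qed.

Lemma Psi_frechet n (v : V n) i : frechet (fun w => Psi G w i) v (fun k => DPsi G G' v i k).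
Proof.
apply: (frechet_C1 _ _ (fun w k => DPsi G G' w i k)).
- move=> y k; exact: Psi_partial.
- move=> k; exact: DPsi_cont.
Qed.

Lemma Psi_cont n (v : V n) i : continuous (fun w : V n => Psi G w i) v.
Proof. exact: (frechet_cont n (fun w => Psi G w i) v _ (Psi_frechet n v i)). Qed.

Lemma Psi_zero n : Psi G (@vzero n) = vzero.
Proof. apply: vec_eq => j; rewrite /Psi /vscale /vzero; ring. Qed.

End PsiSec2.


Definition dot {n} (u w : vec n) := vsum (fun i => u i * w i).

Section LA.
Context {n : nat}.
Implicit Types (H : 'I_n -> 'I_n -> R) (v w : vec n).

Lemma vbasis_sym (i k : 'I_n) : vbasis k i = vbasis i k.
Proof. by rewrite /vbasis eq_sym. Qed.

Lemma dot_sym v w : dot v w = dot w v.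
Proof. apply: vsum_ext => i; ring. Qed.

Lemma dot_vv v : dot v v = vnorm v * vnorm v.
Proof. by rewrite vnorm_sq. Qed.

Lemma qf_rank1 H v a c w :
  qf (fun i j => a * H i j + c * (v i * v j)) w = a * qf H w + c * dot v w * dot v w.
Proof.
rewrite /qf /mat_app /dot.
rewrite (vsum_ext _ (fun k => a * (vsum (fun j => H k j * w j) * w k) +
                             (c * vsum (fun j => v j * w j)) * (v k * w k))); last first.
  move=> k; rewrite (vsum_ext _ (fun j => a * (H k j * w j) + (c * v k) * (v j * w j)));
    last by move=> j; ring.
  rewrite vsum_add !vsum_scal; ring.
by rewrite vsum_add !vsum_scal; ring.
Qed.

Lemma mat_app_sym H v w : (forall i j, H i j = H j i) ->
  dot (mat_app H w) v = dot w (mat_app H v).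
Proof.
move=> Hs; rewrite /dot /mat_app.
rewrite (vsum_ext _ (fun i => vsum (fun j => H i j * w j * v i))); last first.
  by move=> i; rewrite -vsum_scalr.
rewrite vsum_swap; apply: vsum_ext => j.
rewrite -vsum_scal; apply: vsum_ext => i; rewrite (Hs i j); ring.
Qed.

Lemma qf_dot H w : qf H w = dot (mat_app H w) w.
Proof. by []. Qed.

Lemma mat_app_lin H w v (al : R) :
  mat_app H (fun i => w i - al * v i) = fun i => mat_app H w i - al * mat_app H v i.
Proof.
apply: functional_extensionality => i; rewrite /mat_app.
rewrite (vsum_ext _ (fun j => H i j * w j - al * (H i j * v j))); last by move=> j; ring.
by rewrite vsum_sub vsum_scal.
Qed.

Lemma qf_decomp H v (lam : R) w : (forall i j, H i j = H j i) ->
  mat_app H v = vscale lam v -> dot v v <> 0 ->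
  qf H w = qf H (fun i => w i - dot v w / dot v v * v i) + lam * (dot v w * dot v w) / dot v v.
Proof.
move=> Hs Hv Hvv; set al := dot v w / dot v v.
rewrite !qf_dot mat_app_lin Hv /vscale.
have E1 : dot (mat_app H w) v = lam * dot v w.
  by rewrite mat_app_sym // Hv /dot /vscale -vsum_scal; apply: vsum_ext => i; ring.
have -> : dot (fun i => mat_app H w i - al * (lam * v i)) (fun i => w i - al * v i) =
   dot (mat_app H w) w - al * dot (mat_app H w) v - al * lam * dot v w + al * al * lam * dot v v.
  rewrite /dot.
  rewrite (vsum_ext _ (fun i => mat_app H w i * w i - al * (mat_app H w i * v i)
                              - (al * lam) * (v i * w i) + (al * al * lam) * (v i * v i)));
    last by move=> i; ring.
  rewrite vsum_add. rewrite (vsum_sub (fun i => mat_app H w i * w i - al * (mat_app H w i * v i))). rewrite vsum_sub !vsum_scal. done.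
rewrite E1 /al; field; exact: Hvv.
Qed.

Lemma mat_app_rank1 H v (a c lam : R) : mat_app H v = vscale lam v ->
  mat_app (fun i j => a * H i j + c * (v i * v j)) v = vscale (a * lam + c * dot v v) v.
Proof.
move=> Hv; apply: functional_extensionality => i.
have := f_equal (fun z => z i) Hv; rewrite /mat_app /vscale /dot => E.
rewrite (vsum_ext _ (fun j => a * (H i j * v j) + (c * v i) * (v j * v j))); last by move=> j; ring.
rewrite vsum_add !vsum_scal E; ring.
Qed.

Lemma mat_app_zero H : mat_app H vzero = vscale 0 vzero.
Proof.
apply: functional_extensionality => i; rewrite /mat_app /vscale /vzero.
rewrite (vsum_ext _ (fun _ => 0)); last by move=> j; ring.
by rewrite vsum_zero; ring.
Qed.

Lemma qf_ge0_dot v : 0 <= dot v v.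
Proof. apply: vsum_ge0 => i; nra. Qed.

End LA.


Lemma DPsi_0 n G G' (v : vec n) i k : vnorm v = 0 -> DPsi G G' v i k = G' 0 * vbasis k i.
Proof. by rewrite /DPsi; case: Req_EM_T. Qed.

Lemma DPsi_ne n G G' (v : vec n) i k : vnorm v <> 0 -> DPsi G G' v i k =
  G (vnorm v) / vnorm v * vbasis k i +
       (G' (vnorm v) - G (vnorm v) / vnorm v) * (v i * v k) / (vnorm v * vnorm v).
Proof. by rewrite /DPsi; case: Req_EM_T. Qed.

Section Part1.
Variables (n : nat) (f : vec n -> R) (Df : vec n -> vec n) (D2f : vec n -> 'I_n -> 'I_n -> R).
Hypothesis Hdat : C2data f Df D2f.
Variables (G G' : R -> R).
Hypothesis HG : forall s, derivable_pt_lim G s (G' s).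
Hypothesis HG' : continuity G'.
Hypothesis HG0 : G 0 = 0.

Definition Fv (y : vec n) := Psi G (Df y).
Definition J (y : vec n) i j := vsum (fun k => DPsi G G' (Df y) i k * D2f y k j).

Lemma Df_cont (y : V n) : continuous (Df : V n -> V n) y.
Proof. case: Hdat => _ [_ [H3 _]]; apply: cV_of => k; exact: H3. Qed.

Lemma Fv_partial y i j : has_partial (fun z => Fv z i) j y (J y i j).
Proof.
case: Hdat => H1 [H2 [H3 H4]].
rewrite /has_partial /J /Fv.
apply: (chain n (fun w => Psi G w i) (Df y) (fun k => DPsi G G' (Df y) i k)
          (fun t => Df (vadd y (vscale t (vbasis j)))) (fun k => D2f y k j)).
- exact: Psi_frechet.
- by rewrite vadd_scale0.
- move=> k; exact: H2.
Qed.

Lemma Fv_cont i (y : V n) : continuous (fun z : V n => Fv z i) y.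
Proof.
apply: (continuous_comp (Df : V n -> V n) (fun w : V n => Psi G w i)); first exact: Df_cont.
exact: Psi_cont.
Qed.

Lemma J_cont i j (y : V n) : continuous (fun z : V n => J z i j) y.
Proof.
case: Hdat => H1 [H2 [H3 H4]].
apply: (cR_vsum n (fun k (z : V n) => DPsi G G' (Df z) i k * D2f z k j)) => k.
apply: cR_mult; last exact: H4.
apply: (continuous_comp (Df : V n -> V n) (fun w : V n => DPsi G G' w i k)); first exact: Df_cont.
exact: DPsi_cont.
Qed.

Lemma Hsym y i j : D2f y i j = D2f y j i.
Proof. exact: hess_sym Hdat y i j. Qed.

Lemma J_zero y i j : vnorm (Df y) = 0 -> J y i j = G' 0 * D2f y i j.
Proof.
move=> Hv; rewrite /J.
rewrite (vsum_ext _ (fun k => vbasis i k * (G' 0 * D2f y k j))); last first.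
  move=> k; rewrite DPsi_0 // vbasis_sym; ring.
by rewrite vsum_delta.
Qed.

Lemma J_form y lam i j : mat_app (D2f y) (Df y) = vscale lam (Df y) -> vnorm (Df y) <> 0 ->
  J y i j = G (vnorm (Df y)) / vnorm (Df y) * D2f y i j +
     ((G' (vnorm (Df y)) - G (vnorm (Df y)) / vnorm (Df y)) * lam /
       (vnorm (Df y) * vnorm (Df y))) * (Df y i * Df y j).
Proof.
move=> Hl Hv; rewrite /J.
have E := DPsi_ne n G G' (Df y); set s := vnorm (Df y) in Hv E *; set v := Df y in Hl E *.
rewrite (vsum_ext _ (fun k => G s / s * (vbasis i k * D2f y k j) +
     ((G' s - G s / s) * v i / (s * s)) * (D2f y j k * v k))); last first.
  move=> k; rewrite E // vbasis_sym (Hsym y k j); field; exact: Hv.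
rewrite vsum_add !vsum_scal vsum_delta.
have := f_equal (fun z => z j) Hl; rewrite /mat_app /vscale => ->.
field; exact: Hv.
Qed.

Lemma J_sym_of y lam i j : mat_app (D2f y) (Df y) = vscale lam (Df y) -> J y i j = J y j i.
Proof.
move=> Hl; case: (Req_EM_T (vnorm (Df y)) 0) => Hv.
  by rewrite !J_zero // Hsym.
rewrite (J_form y lam i j) // (J_form y lam j i) // (Hsym y i j); ring.
Qed.

End Part1.

Lemma c2d_vsum n (h : 'I_n -> R -> R -> R) a b :
  (forall k, continuity_2d_pt (h k) a b) -> continuity_2d_pt (fun u v => vsum (fun k => h k u v)) a b.
Proof.
move=> H; rewrite /vsum; elim: (index_enum _) => [|c s IH].
  apply: (continuity_2d_pt_ext (fun _ _ => 0)); first by move=> *; rewrite big_nil.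
  exact: continuity_2d_pt_const.
apply: (continuity_2d_pt_ext (fun u v => h c u v + \big[Rplus/0]_(k <- s) h k u v)).
  by move=> *; rewrite big_cons.
exact: continuity_2d_pt_plus.
Qed.

Section Part1b.
Variables (n : nat) (f : vec n -> R) (Df : vec n -> vec n) (D2f : vec n -> 'I_n -> 'I_n -> R).
Hypothesis Hdat : C2data f Df D2f.
Variables (G G' : R -> R).
Hypothesis HG : forall s, derivable_pt_lim G s (G' s).
Hypothesis HG' : continuity G'.
Hypothesis HG0 : G 0 = 0.
Hypothesis HJs : forall y i j, J n Df D2f G G' y i j = J n Df D2f G G' y j i.

Local Notation F := (Fv n Df G).
Local Notation JJ := (J n Df D2f G G').
Let FvP := Fv_partial n f Df D2f Hdat G G' HG HG' HG0.
Let FvC := Fv_cont n f Df D2f Hdat G G' HG HG' HG0.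
Let JC := J_cont n f Df D2f Hdat G G' HG HG' HG0.

Definition phi (x : vec n) := RInt (fun t => vsum (fun i => F (vscale t x) i * x i)) 0 1.

Lemma F_line_deriv (a w : vec n) i t0 :
  derivable_pt_lim (fun t => F (vadd a (vscale t w)) i) t0
    (vsum (fun m => JJ (vadd a (vscale t0 w)) i m * w m)).
Proof.
apply: (line_deriv n (fun z => F z i) (fun y m => JJ y i m)).
- move=> y; rewrite /is_grad => m; exact: (FvP y i m).
- move=> m; exact: (JC _ _ _).
Qed.

Lemma phi_partial (x : vec n) j : has_partial phi j x (F x j).
Proof.
set Z := fun t u => vadd (vscale t x) (vscale u (vscale t (vbasis j))).
set k := fun u t => vsum (fun i => F (Z t u) i * (x i + u * vbasis j i)).
set Dk := fun u t => vsum (fun i => (t * JJ (Z t u) i j) * (x i + u * vbasis j i) +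
                                   F (Z t u) i * vbasis j i).
have Ephi : forall u, phi (vadd x (vscale u (vbasis j))) = RInt (fun t => k u t) 0 1.
  move=> u; rewrite /phi /k; f_equal; apply: functional_extensionality => t.
  apply: vsum_ext => i.
  have -> : vscale t (vadd x (vscale u (vbasis j))) = Z t u.
    apply: vec_eq => m; rewrite /Z /vadd /vscale; ring.
  by rewrite /vadd /vscale.
have Hder : forall u t, is_derive (fun u => k u t) u (Dk u t).
  move=> u t; apply/is_derive_Reals; rewrite /k /Dk; apply: dsum => i.
  apply: (derivable_pt_lim_mult (fun u => F (Z t u) i) (fun u => x i + u * vbasis j i)).
    apply: (dval _ _ (vsum (fun m => JJ (Z t u) i m * vscale t (vbasis j) m))).
      rewrite (vsum_ext _ (fun m => vbasis j m * (t * JJ (Z t u) i m))); last first.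
        move=> m; rewrite /vscale; ring.
      by rewrite vsum_delta.
    exact: F_line_deriv.
  exact: dlin.
have HZc : forall u (t0 : R), continuous (fun t : R => (Z t u : V n)) t0.
  move=> u t0; apply: (cV_of n (fun t : R => (Z t u : V n))) => m; rewrite /Z /vadd /vscale.
  apply: cR_plus; apply: cR_mult; try exact: continuous_id; try exact: cR_const.
  apply: cR_mult; [exact: continuous_id| exact: cR_const].
have Hpar := is_derive_RInt_param k 0 1 0.
have Hd0 : is_derive (fun u => RInt (fun t => k u t) 0 1) 0
              (RInt (fun t => Derive (fun u => k u t) 0) 0 1).
  apply: Hpar.
  - apply: filter_forall => u0 t _; eexists; exact: Hder.
  - move=> t _; apply: (continuity_2d_pt_ext (fun u v => Dk u v)).
      move=> u v; symmetry; exact: is_derive_unique (Hder u v).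
    rewrite /Dk; apply: c2d_vsum => i.
    have cZ : forall m, continuity_2d_pt (fun u v => Z v u m) 0 t.
      move=> m; rewrite /Z /vadd /vscale.
      apply: continuity_2d_pt_plus.
        apply: continuity_2d_pt_mult; [exact: continuity_2d_pt_id2| exact: continuity_2d_pt_const].
      apply: continuity_2d_pt_mult; first exact: continuity_2d_pt_id1.
      apply: continuity_2d_pt_mult; [exact: continuity_2d_pt_id2| exact: continuity_2d_pt_const].
    apply: continuity_2d_pt_plus; apply: continuity_2d_pt_mult.
    + apply: continuity_2d_pt_mult; first exact: continuity_2d_pt_id2.
      apply: (c2d_comp n (fun u v => Z v u) (fun y => JJ y i j)) => //; exact: (JC _ _ _).
    + apply: continuity_2d_pt_plus; first exact: continuity_2d_pt_const.
      apply: continuity_2d_pt_mult; [exact: continuity_2d_pt_id1| exact: continuity_2d_pt_const].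
    + apply: (c2d_comp n (fun u v => Z v u) (fun y => F y i)) => //; exact: (FvC _ _).
    + exact: continuity_2d_pt_const.
  - apply: filter_forall => u; apply: ex_RInt_continuous => z _.
    rewrite /k; apply: (cR_vsum n (fun i t => F (Z t u) i * (x i + u * vbasis j i))) => i.
    apply: cR_mult; last exact: cR_const.
    apply: (continuous_comp (fun t : R => (Z t u : V n)) (fun y : V n => F y i));
      [exact: HZc | exact: (FvC _ _)].
set dF := fun s => F (vscale s x) j + s * vsum (fun m => JJ (vscale s x) j m * x m).
have EDk : forall t, Derive (fun u => k u t) 0 = dF t.
  move=> t; rewrite (is_derive_unique _ _ _ (Hder 0 t)) /Dk /dF.
  have EZ : Z t 0 = vscale t x by rewrite /Z vadd_scale0.
  rewrite EZ.
  rewrite (vsum_ext _ (fun i => t * (JJ (vscale t x) j i * x i) + vbasis j i * F (vscale t x) i));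
    last by move=> i; rewrite HJs; ring.
  rewrite vsum_add vsum_scal vsum_delta; ring.
have HdF : forall s, derivable_pt_lim (fun s => s * F (vscale s x) j) s (dF s).
  move=> s; have H1 := F_line_deriv vzero x j s.
  have Ez : forall r, vadd vzero (vscale r x) = vscale r x.
    move=> r; apply: vec_eq => m; rewrite /vadd /vzero; ring.
  rewrite Ez in H1.
  have H1' : derivable_pt_lim (fun t => F (vscale t x) j) s
              (vsum (fun m => JJ (vscale s x) j m * x m)).
    apply: (dext _ _ _ _ _ H1) => t; by rewrite Ez.
  have := derivable_pt_lim_mult id (fun t => F (vscale t x) j) s 1 _ (derivable_pt_lim_id s) H1'.
  rewrite /mult_fct /id /dF => H2; apply: (dval _ _ _ _ _ H2); ring.
have HdFc : forall s, continuous dF s.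
  move=> s; have Hs : continuous (fun r : R => (vscale r x : V n)) s.
    apply: (cV_of n (fun r : R => (vscale r x : V n))) => m; rewrite /vscale.
    apply: cR_mult; [exact: continuous_id| exact: cR_const].
  rewrite /dF; apply: cR_plus.
    apply: (continuous_comp (fun r : R => (vscale r x : V n)) (fun y : V n => F y j));
      [exact: Hs | exact: (FvC _ _)].
  apply: cR_mult; first exact: continuous_id.
  apply: (cR_vsum n (fun m r => JJ (vscale r x) j m * x m)) => m.
  apply: cR_mult; last exact: cR_const.
  apply: (continuous_comp (fun r : R => (vscale r x : V n)) (fun y : V n => JJ y j m));
    [exact: Hs | exact: (JC _ _ _)].
have HI := is_RInt_derive (fun s => s * F (vscale s x) j) dF 0 1
             (fun s _ => proj2 (is_derive_Reals _ _ _) (HdF s)) (fun s _ => HdFc s).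
have EI : RInt (fun t => Derive (fun u => k u t) 0) 0 1 = F x j.
  rewrite (RInt_ext _ dF); last by move=> t _; exact: EDk.
  rewrite (is_RInt_unique _ _ _ _ HI).
  have -> : vscale 1 x = x by apply: vec_eq => m; rewrite /vscale; ring.
  rewrite /minus /plus /opp /=; ring.
rewrite EI in Hd0.
rewrite /has_partial; apply: (dext (fun u => RInt (fun t => k u t) 0 1)).
  by move=> u; rewrite Ephi.
by apply/is_derive_Reals.
Qed.

End Part1b.


Lemma mat_app_scale n (H : 'I_n -> 'I_n -> R) a v :
  mat_app H (vscale a v) = vscale a (mat_app H v).
Proof.
apply: functional_extensionality => i; rewrite /mat_app /vscale -vsum_scal.
apply: vsum_ext => j; ring.
Qed.

Section Part1c.
Variables (n : nat) (f : vec n -> R) (Df : vec n -> vec n) (D2f : vec n -> 'I_n -> 'I_n -> R).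
Hypothesis Hdat : C2data f Df D2f.
Hypothesis Hconv : convex f.
Hypothesis Heig : forall y, exists lam, mat_app (D2f y) (Df y) = vscale lam (Df y).
Variables (G G' : R -> R).
Hypothesis HG : forall s, derivable_pt_lim G s (G' s).
Hypothesis HG' : continuity G'.
Hypothesis HG0 : G 0 = 0.
Hypothesis Hmono : nondecr G.

Local Notation F := (Fv n Df G).
Local Notation JJ := (J n Df D2f G G').

Lemma HJs y i j : JJ y i j = JJ y j i.
Proof. have [lam Hl] := Heig y; exact: (J_sym_of n f Df D2f Hdat G G' y lam i j Hl). Qed.

Definition phi0 := phi n Df G.

Lemma phi_data : C2data phi0 F JJ.
Proof.
split; [|split; [|split]].
- move=> y j; exact: (phi_partial n f Df D2f Hdat G G' HG HG' HG0 HJs y j).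
- move=> y i j; exact: (Fv_partial n f Df D2f Hdat G G' HG HG' HG0 y i j).
- move=> i y; exact: (Fv_cont n f Df D2f Hdat G G' HG HG' HG0 i y).
- move=> i j y; exact: (J_cont n f Df D2f Hdat G G' HG HG' HG0 i j y).
Qed.

Lemma G'_ge0 s : 0 <= G' s.
Proof. apply: (deriv_nonneg G s) (HG s) => a b Hab; apply: Hmono; lra. Qed.

Lemma Hpsd y w : 0 <= qf (D2f y) w.
Proof. exact: psd_of_convex Hconv Hdat y w. Qed.

Lemma J_psd y w : 0 <= qf (JJ y) w.
Proof.
case: (Req_EM_T (vnorm (Df y)) 0) => Hv.
  have -> : JJ y = fun i j => G' 0 * D2f y i j + 0 * (Df y i * Df y j).
    apply: functional_extensionality => i; apply: functional_extensionality => j.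
    rewrite J_zero //; ring.
  rewrite qf_rank1; have := G'_ge0 0; have := Hpsd y w; nra.
have [lam Hl] := Heig y.
set v := Df y in Hl Hv *.
set s := vnorm v in Hv *.
set a := G s / s.
set c := (G' s - a) * lam / (s * s).
have Hs : 0 < s by case: (Rle_lt_or_eq_dec 0 s (vnorm_ge0 v)) => // H; exfalso; apply: Hv; rewrite -H.
have -> : JJ y = fun i j => a * D2f y i j + c * (v i * v j).
  apply: functional_extensionality => i; apply: functional_extensionality => j.
  by rewrite (J_form n f Df D2f Hdat G G' y lam i j Hl Hv).
rewrite qf_rank1.
have Hvv : dot v v = s * s by rewrite dot_vv.
have Hvv0 : dot v v <> 0 by rewrite Hvv; nra.
rewrite (qf_decomp (D2f y) v lam w (hess_sym n f Df D2f Hdat y) Hl Hvv0).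
have Ha : 0 <= a.
  rewrite /a; apply: Rdiv_le_0_compat => //; rewrite -HG0; apply: Hmono; lra.
have Hlam : 0 <= lam.
  have := Hpsd y v; rewrite qf_dot Hl.
  have -> : dot (vscale lam v) v = lam * dot v v by rewrite /dot /vscale -vsum_scal; apply: vsum_ext => i; ring.
  rewrite Hvv => H; have Hss : 0 < s * s by nra.
  apply: Rnot_lt_le => Hl0; have : lam * (s * s) < 0 by nra. lra.
set w' := fun i => w i - dot v w / dot v v * v i.
have Hq := Hpsd y w'.
have -> : a * (qf (D2f y) w' + lam * (dot v w * dot v w) / dot v v) + c * dot v w * dot v w =
   a * qf (D2f y) w' + (G' s * lam / (s * s)) * (dot v w * dot v w).
  rewrite Hvv /c /a; field; lra.
have H1 : 0 <= G' s * lam / (s * s).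
  apply: Rdiv_le_0_compat; [have := G'_ge0 s; nra| nra].
have H2 : 0 <= dot v w * dot v w by nra.
have := Rmult_le_pos _ _ Ha Hq; have := Rmult_le_pos _ _ H1 H2; lra.
Qed.

Lemma phi_convex : convex phi0.
Proof. exact: convex_of_psd phi_data J_psd. Qed.

Lemma phi_eig x w H' : is_grad phi0 x w -> is_hess phi0 x H' ->
  exists lam, mat_app H' w = vscale lam w.
Proof.
case: phi_data => P1 [P2 [P3 P4]].
move=> Hw [Dg [HDg HH]].
have Ew : w = F x by exact: grad_unique Hw (P1 x).
have EDg : Dg = F by apply: functional_extensionality => y; exact: grad_unique (HDg y) (P1 y).
have EH : H' = JJ x.
  apply: functional_extensionality => i; apply: functional_extensionality => j.
  rewrite EDg in HH; exact: uniqueness_limite (HH i j) (P2 x i j).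
rewrite Ew EH.
case: (Req_EM_T (vnorm (Df x)) 0) => Hv.
  have -> : F x = vzero by rewrite /Fv (vnorm_eq0 _ Hv) Psi_zero.
  by exists 0; rewrite mat_app_zero.
have [lam Hl] := Heig x.
set v := Df x in Hl Hv *.
set s := vnorm v in Hv *.
set a := G s / s.
set c := (G' s - a) * lam / (s * s).
have -> : JJ x = fun i j => a * D2f x i j + c * (v i * v j).
  apply: functional_extensionality => i; apply: functional_extensionality => j.
  by rewrite (J_form n f Df D2f Hdat G G' x lam i j Hl Hv).
have -> : F x = vscale a v by [].
exists (a * lam + c * dot v v).
rewrite mat_app_scale (mat_app_rank1 _ _ _ _ _ Hl).
apply: functional_extensionality => i; rewrite /vscale; ring.
Qed.

Lemma phi_classF : classF phi0.
Proof.
split; first exact: phi_convex.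
split; first exact: (data_C2fun n phi0 F JJ phi_data).
exact: phi_eig.
Qed.

End Part1c.


Section Cover.
Variables (al be : nat -> R).
Hypothesis Hab : forall k, al k < be k.

Lemma bigR_ge0 (s : seq nat) : 0 <= \big[Rplus/0]_(k <- s) (be k - al k).
Proof.
apply: (big_ind (fun x => 0 <= x)); [lra| move=> *; lra| move=> k _; have := Hab k; lra].
Qed.

Lemma cover_len : forall N (s : seq nat), (size s <= N)%N -> forall c1 c2, c1 <= c2 ->
  (forall c, c1 <= c <= c2 -> exists k, k \in s /\ al k < c < be k) ->
  c2 - c1 <= \big[Rplus/0]_(k <- s) (be k - al k).
Proof.
elim=> [|N IH] s Hs c1 c2 H12 Hc.
  have [k [Hk _]] := Hc c2 ltac:(lra).
  by move: Hs; rewrite leqn0 => /nilP Es; rewrite Es in Hk.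
have [j [Hj [Hj1 Hj2]]] := Hc c2 ltac:(lra).
rewrite (big_rem j Hj) /=.
have := bigR_ge0 (rem j s) => H0.
case: (Rlt_le_dec (al j) c1) => Hc1; first lra.
have IH' := IH (rem j s) _ c1 (al j) Hc1.
have : al j - c1 <= \big[Rplus/0]_(k <- rem j s) (be k - al k).
  apply: IH'.
    by rewrite size_rem //; move: Hs; case: (size s).
  move=> c Hc'; have [k [Hk [Hk1 Hk2]]] := Hc c ltac:(lra).
  exists k; split => //; apply: rem_mem => //.
  apply/eqP => E; rewrite E in Hk1; lra.
move=> H; apply: Rle_trans (Rplus_le_compat_l (be j - al j) _ _ H); lra.
Qed.

Lemma finite_cover c1 c2 : c1 <= c2 ->
  (forall c, c1 <= c <= c2 -> exists k, al k < c < be k) ->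
  exists K, forall c, c1 <= c <= c2 -> exists k, (k <= K)%N /\ al k < c < be k.
Proof.
move=> H12 Hc.
set S := fun x => c1 <= x <= c2 /\
  exists K, forall c, c1 <= c <= x -> exists k, (k <= K)%N /\ al k < c < be k.
have S1 : S c1.
  split; first lra.
  have [k0 Hk0] := Hc c1 ltac:(lra).
  exists k0 => c Hc'; exists k0; split => //; have -> : c = c1 by lra. done.
have Hb : bound S by exists c2 => x [[_ Hx] _].
have [m [Hm1 Hm2]] := completeness S Hb (ex_intro _ c1 S1).
have Hcm : c1 <= m by apply: Hm1.
have Hmc : m <= c2 by apply: Hm2 => x [[_ Hx] _].
have [j Hj] := Hc m ltac:(lra).
have [x [[Hx1 [K HK]] Hxj]] : exists x, S x /\ al j < x.
  apply: NNPP => Hn; have : m <= al j.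
    apply: Hm2 => x Sx; apply: Rnot_lt_le => Hlt; apply: Hn; by exists x.
  lra.
set y := Rmin c2 ((m + be j) / 2).
have Sy : S y.
  split; first by split; [rewrite /y; apply: Rmin_glb; lra| apply: Rmin_l].
  exists (maxn K j) => c Hc'.
  case: (Rle_lt_dec c x) => Hcx.
    have [k [Hk Hk']] := HK c ltac:(lra).
    exists k; split => //; apply: (leq_trans Hk); exact: leq_maxl.
  exists j; split; first exact: leq_maxr.
  have : y <= (m + be j) / 2 by apply: Rmin_r.
  lra.
have Hym := Hm1 y Sy.
case: (Rle_lt_dec c2 ((m + be j) / 2)) => Hc2.
  have Ey : y = c2 by rewrite /y Rmin_left.
  rewrite Ey in Sy; case: Sy => _ [K' HK']; by exists K'.
have Ey : y = (m + be j) / 2 by rewrite /y Rmin_right; lra.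
lra.
Qed.
End Cover.

Lemma big_sum_f n (F : nat -> R) :
  \big[Rplus/0]_(k <- index_iota 0 n.+1) F k = sum_f_R0 F n.
Proof.
elim: n => [|n IH].
  by rewrite /index_iota /= big_cons big_nil Rplus_0_r.
rewrite big_nat_recr //= -IH.
by [].
Qed.

Lemma geom_le n : sum_f_R0 (fun k => (1/2)^k) n <= 2 - (1/2)^n.
Proof.
elim: n => [|n IH] /=; first lra.
have := pow_le (1/2) n ltac:(lra); lra.
Qed.

Lemma negligible_interval (A : R -> Prop) c1 c2 : negligible A -> c1 < c2 ->
  (forall c, c1 <= c <= c2 -> A c) -> False.
Proof.
move=> HN H12 HA.
set L := c2 - c1.
have [a [b [Hab [Hcov Hsum]]]] := HN (L / 4) ltac:(rewrite /L; lra).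
set d := L / 8.
set al := fun k => a k - d * (1/2)^k.
set be := fun k => b k + d * (1/2)^k.
have Hpos : forall k, 0 < d * (1/2)^k.
  move=> k; apply: Rmult_lt_0_compat; first (rewrite /d /L; lra).
  apply: pow_lt; lra.
have Hab' : forall k, al k < be k by move=> k; have := Hab k; have := Hpos k; rewrite /al /be; lra.
have [K HK] : exists K, forall c, c1 <= c <= c2 -> exists k, (k <= K)%N /\ al k < c < be k.
  apply: finite_cover; first lra.
  move=> c Hc; have [k Hk] := Hcov c (HA c Hc); exists k; have := Hpos k; rewrite /al /be; lra.
have := cover_len al be Hab' (size (index_iota 0 K.+1)) (index_iota 0 K.+1) (leqnn _) c1 c2 ltac:(lra).
move=> /(_ _) H.
have : c2 - c1 <= \big[Rplus/0]_(k <- index_iota 0 K.+1) (be k - al k).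
  apply: H => c Hc; have [k [Hk Hk']] := HK c Hc; exists k; split => //.
  by rewrite mem_index_iota.
rewrite big_sum_f.
have -> : sum_f_R0 (fun k => be k - al k) K =
          sum_f_R0 (fun k => b k - a k) K + sum_f_R0 (fun k => (1/2)^k * (2 * d)) K.
  rewrite -sum_plus; apply Stdlib.Reals.PartSum.sum_eq; intros k _; rewrite /al /be; ring.
rewrite -scal_sum.
have := Hsum K; have := geom_le K; have := pow_le (1/2) K ltac:(lra).
move=> P1 P2 P3 P4. rewrite /d /L in P3 P4. have HL : 0 < c2 - c1 by lra. have P2p : sum_f_R0 (pow (1/2)) K <= 2 - (1/2)^K := P2. nra.
Qed.


Lemma locally_ne {U : UniformSpace} (h : U -> R) x : continuous h x -> h x <> 0 ->
  locally x (fun y => h y <> 0).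
Proof.
move=> Hc Hx; have Hp : 0 < Rabs (h x) / 2 by have := Rabs_pos_lt _ Hx; lra.
move: Hc => /filterlim_locally /(_ (mkposreal _ Hp)).
apply: filter_imp => y /ball_R /= Hb E; rewrite E in Hb.
rewrite Rminus_0_l Rabs_Ropp in Hb; lra.
Qed.

Lemma cont_line n (x w : vec n) t0 : continuous (fun t : R => (vadd x (vscale t w) : V n)) t0.
Proof.
apply: (cV_of n (fun t : R => (vadd x (vscale t w) : V n))) => m; rewrite /vadd /vscale.
apply: cR_plus; first exact: cR_const.
apply: cR_mult; [exact: continuous_id| exact: cR_const].
Qed.

Lemma ivt_between (h : R -> R) a b c : continuity h -> a <= b ->
  Rmin (h a) (h b) <= c <= Rmax (h a) (h b) -> exists z, a <= z <= b /\ h z = c.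
Proof.
move=> Hc Hab Hcc.
case: (Req_dec c (h a)) => [->|Ha]; first by exists a; split => //; lra.
case: (Req_dec c (h b)) => [->|Hb]; first by exists b; split => //; lra.
case: (Rle_lt_or_eq_dec _ _ Hab) => [Hlt|E]; last first.
  subst b; rewrite Rmin_left ?Rmax_left in Hcc; lra.
case: (Rle_lt_dec (h a) (h b)) => Hhab.
- rewrite Rmin_left ?Rmax_right in Hcc; try lra.
  have Hc' : continuity (fun t => h t - c) by apply: continuity_minus => //; exact: continuity_const.
  have [z [Hz Ez]] := IVT (fun t => h t - c) a b Hc' Hlt ltac:(lra) ltac:(lra).
  by exists z; split => //; lra.
- rewrite Rmin_right ?Rmax_left in Hcc; try lra.
  have Hc' : continuity (fun t => c - h t) by apply: continuity_minus => //; exact: continuity_const.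
  have [z [Hz Ez]] := IVT (fun t => c - h t) a b Hc' Hlt ltac:(lra) ltac:(lra).
  by exists z; split => //; lra.
Qed.

Definition Qc {n} (v : vec n) (H : 'I_n -> 'I_n -> R) i j :=
  v i * mat_app H v j - v j * mat_app H v i.

Lemma eig_of_comm n (v : vec n) H : vnorm v <> 0 -> (forall i j, Qc v H i j = 0) ->
  mat_app H v = vscale (dot v (mat_app H v) / dot v v) v.
Proof.
move=> Hv HQ; have Hvv : dot v v <> 0 by rewrite dot_vv => E; apply: Hv; nra.
apply: functional_extensionality => i; rewrite /vscale.
apply: (Rmult_eq_reg_r (dot v v)) => //.
have -> : dot v (mat_app H v) / dot v v * v i * dot v v = v i * dot v (mat_app H v) by field.
rewrite /dot -vsum_scal -vsum_scal; apply: vsum_ext => j.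
have := HQ i j; rewrite /Qc => E. have E2 : v j * (v i * mat_app H v j - v j * mat_app H v i) = 0 by rewrite E; ring. nra.
Qed.

Section Part2.
Variables (n : nat) (f : vec n -> R) (Df : vec n -> vec n) (D2f : vec n -> 'I_n -> 'I_n -> R).
Hypothesis Hdat : C2data f Df D2f.
Variables (G G' : R -> R).
Hypothesis HG : forall s, derivable_pt_lim G s (G' s).
Hypothesis HG' : continuity G'.
Hypothesis HG0 : G 0 = 0.
Variables (phi : vec n -> R) (Dphi : vec n -> vec n) (D2phi : vec n -> 'I_n -> 'I_n -> R).
Hypothesis Hpdat : C2data phi Dphi D2phi.
Hypothesis Hrel : forall y, Df y <> vzero -> Dphi y = Psi G (Df y).
Hypothesis Hae : negligible (fun s => ~ (s * G' s - G s <> 0)).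

Local Notation JJ := (J n Df D2f G G').

Lemma vnorm_ne0 (v : vec n) : vnorm v <> 0 -> v <> vzero.
Proof. by move=> H E; apply: H; rewrite E vnorm_zero. Qed.

Lemma sf_cont (x w : vec n) t0 : continuous (fun t : R => vnorm (Df (vadd x (vscale t w)))) t0.
Proof.
apply: (continuous_comp (fun t : R => (Df (vadd x (vscale t w)) : V n)) (fun v : V n => vnorm v)).
  apply: (continuous_comp (fun t : R => (vadd x (vscale t w) : V n)) (Df : V n -> V n)).
    exact: cont_line.
  exact: (Df_cont n f Df D2f Hdat).
exact: cont_vnorm.
Qed.

Lemma D2phi_eq y i j : vnorm (Df y) <> 0 -> D2phi y i j = JJ y i j.
Proof.
move=> Hv; case: Hpdat => P1 [P2 [P3 P4]].
have H1 : is_derive (fun t => Fv n Df G (vadd y (vscale t (vbasis j))) i) 0 (JJ y i j).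
  apply/is_derive_Reals; exact: (Fv_partial n f Df D2f Hdat G G' HG HG' HG0 y i j).
have Hloc : locally 0 (fun t : R => vnorm (Df (vadd y (vscale t (vbasis j)))) <> 0).
  apply: (locally_ne (fun t : R => vnorm (Df (vadd y (vscale t (vbasis j)))))).
    exact: sf_cont.
  by rewrite vadd_scale0.
have H2 : is_derive (fun t => Dphi (vadd y (vscale t (vbasis j))) i) 0 (JJ y i j).
  apply: is_derive_ext_loc H1; apply: filter_imp Hloc => t Ht.
  by rewrite Hrel //; apply: vnorm_ne0.
have H3 := P2 y i j; rewrite /has_partial in H3.
exact: uniqueness_limite H3 (proj1 (is_derive_Reals _ _ _) H2).
Qed.

Lemma J_form2 y i j : vnorm (Df y) <> 0 ->
  JJ y i j = G (vnorm (Df y)) / vnorm (Df y) * D2f y i j +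
     (G' (vnorm (Df y)) - G (vnorm (Df y)) / vnorm (Df y)) / (vnorm (Df y) * vnorm (Df y)) *
       (Df y i * mat_app (D2f y) (Df y) j).
Proof.
move=> Hv; rewrite /J.
have E := DPsi_ne n G G' (Df y); set s := vnorm (Df y) in Hv E *; set v := Df y in E *.
rewrite (vsum_ext _ (fun k => G s / s * (vbasis i k * D2f y k j) +
     ((G' s - G s / s) * v i / (s * s)) * (D2f y j k * v k))); last first.
  move=> k; rewrite E // vbasis_sym (hess_sym n f Df D2f Hdat y k j); field; exact: Hv.
rewrite vsum_add !vsum_scal vsum_delta /mat_app; field; exact: Hv.
Qed.

Lemma comm_good y : vnorm (Df y) <> 0 ->
  vnorm (Df y) * G' (vnorm (Df y)) - G (vnorm (Df y)) <> 0 ->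
  forall i j, Qc (Df y) (D2f y) i j = 0.
Proof.
move=> Hv Hg i j.
have Hs : D2phi y i j = D2phi y j i by exact: hess_sym Hpdat y i j.
rewrite !D2phi_eq // !J_form2 // (hess_sym n f Df D2f Hdat y j i) in Hs.
set s := vnorm (Df y) in Hv Hg Hs.
have Hc : (G' s - G s / s) / (s * s) <> 0.
  move=> E; apply: Hg.
  have Hss : s * s <> 0 by apply: Rmult_integral_contrapositive; split.
  have E3 : G' s - G s / s = 0.
    have -> : G' s - G s / s = (G' s - G s / s) / (s * s) * (s * s) by field.
    by rewrite E; ring. have -> : s * G' s - G s = s * (G' s - G s / s) by field.
  by rewrite E3 Rmult_0_r.
rewrite /Qc; apply: (Rmult_eq_reg_l ((G' s - G s / s) / (s * s))) => //; lra.
Qed.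

Lemma comm_all x : vnorm (Df x) <> 0 -> forall i j, Qc (Df x) (D2f x) i j = 0.
Proof.
move=> Hv i0 j0; apply: NNPP => HQ.
have Hzero : forall m, mat_app (D2f x) (Df x) m = 0.
  move=> m.
  set l := fun t => vadd x (vscale t (vbasis m)).
  set qf0 := fun t => Qc (Df (l t)) (D2f (l t)) i0 j0.
  set sf := fun t => vnorm (Df (l t)).
  have Hsf : forall t, continuous sf t by move=> t; exact: sf_cont.
  have Hqf : continuous qf0 0.
    case: Hdat => _ [_ [H3 H4]].
    have cD : forall k, continuous (fun t => Df (l t) k) 0.
      move=> k; apply: (continuous_comp (fun t : R => (l t : V n)) (fun z : V n => Df z k)).
        exact: cont_line.
      exact: H3.
    have cH : forall a b, continuous (fun t => D2f (l t) a b) 0.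
      move=> a b; apply: (continuous_comp (fun t : R => (l t : V n)) (fun z : V n => D2f z a b)).
        exact: cont_line.
      exact: H4.
    have cM : forall a, continuous (fun t => mat_app (D2f (l t)) (Df (l t)) a) 0.
      move=> a; rewrite /mat_app.
      apply: (cR_vsum n (fun k t => D2f (l t) a k * Df (l t) k)) => k; exact: cR_mult.
    rewrite /qf0 /Qc; apply: cR_minus; exact: cR_mult.
  have Hl0 : l 0 = x by rewrite /l vadd_scale0.
  have Hloc : locally 0 (fun t => qf0 t <> 0 /\ sf t <> 0).
    apply: filter_and.
      apply: locally_ne => //; by rewrite /qf0 Hl0.
    apply: locally_ne => //; by rewrite /sf Hl0.
  have [d [Hd Hdd]] := locally_R0 _ Hloc.
  have Hbad : forall t, Rabs t < d -> sf t * G' (sf t) - G (sf t) = 0.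
    move=> t Ht; apply: NNPP => Hne; have [Hq Hs] := Hdd t Ht.
    apply: Hq; rewrite /qf0; exact: comm_good.
  have Hconst : forall t, Rabs t < d -> sf t = sf 0.
    move=> t Ht; apply: NNPP => Hne.
    have Hcs : continuity sf by move=> z; apply/continuity_pt_filterlim; exact: Hsf.
    set c1 := Rmin (sf (Rmin 0 t)) (sf (Rmax 0 t)).
    set c2 := Rmax (sf (Rmin 0 t)) (sf (Rmax 0 t)).
    have Hlt : sf 0 < sf t \/ sf t < sf 0.
      case: (Rtotal_order (sf 0) (sf t)) => [|[E|]]; auto; exfalso; apply: Hne; by rewrite E.
    have Hc12 : c1 < c2.
      rewrite /c1 /c2; case: Hlt => Hlt; unfold Rmin, Rmax; repeat destruct Rle_dec; lra.
    apply: (negligible_interval _ c1 c2 Hae Hc12) => c Hc.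
    have [z [Hz Ez]] := ivt_between sf (Rmin 0 t) (Rmax 0 t) c Hcs (Rmin_Rmax _ _) Hc.
    have Hzd : Rabs z < d.
      apply: Rle_lt_trans _ Ht.
      case: (Rle_dec 0 t) => H0.
        rewrite Rmin_left ?Rmax_right // in Hz; rewrite !Rabs_right; lra.
      rewrite Rmin_right ?Rmax_left in Hz; try lra; rewrite !Rabs_left1; lra.
    rewrite -Ez; move=> Hn; apply: Hn; exact: Hbad.
  have Hsq : forall t, sf t * sf t = vsum (fun k => Df (l t) k * Df (l t) k).
    move=> t; exact: vnorm_sq.
  have Hd1 : derivable_pt_lim (fun t => vsum (fun k => Df (l t) k * Df (l t) k)) 0
     (vsum (fun k => D2f x k m * Df x k + Df x k * D2f x k m)).
    apply: dsum => k.
    have Hk : derivable_pt_lim (fun t => Df (l t) k) 0 (D2f x k m).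
      case: Hdat => _ [H2 _]; exact: H2.
    have := derivable_pt_lim_mult _ _ _ _ _ Hk Hk; rewrite /mult_fct Hl0; exact.
  have Hd2 : derivable_pt_lim (fun t => vsum (fun k => Df (l t) k * Df (l t) k)) 0 0.
    apply/is_derive_Reals.
    apply: (is_derive_ext_loc (fun _ => sf 0 * sf 0)); last first.
      apply/is_derive_Reals; exact: derivable_pt_lim_const.
    have [d' Hd'] : exists d' : posreal, d' = d :> R by exists (mkposreal _ Hd).
    exists d' => t /ball_R; rewrite Rminus_0_r Hd' => Ht.
    by rewrite -Hsq (Hconst t Ht).
  have E := uniqueness_limite _ _ _ _ Hd1 Hd2.
  have : 2 * mat_app (D2f x) (Df x) m = 0.
    rewrite -E /mat_app -vsum_scal; apply: vsum_ext => k.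
    rewrite (hess_sym n f Df D2f Hdat x k m); ring.
  lra.
apply: HQ; rewrite /Qc !Hzero; ring.
Qed.

Lemma f_eig x : exists lam, mat_app (D2f x) (Df x) = vscale lam (Df x).
Proof.
case: (Req_EM_T (vnorm (Df x)) 0) => Hv.
  by rewrite (vnorm_eq0 _ Hv); exists 0; exact: mat_app_zero.
eexists; apply: eig_of_comm => //; exact: comm_all.
Qed.

End Part2.


Theorem proposition3p2 (n : nat) (f : vec n -> R) :
  convex f -> C2fun f ->
  (* (i) *)
  (classF f ->
     forall G : R -> R, nondecr G -> C1fun G -> G 0 = 0 ->
       exists phi : vec n -> R, classF phi /\
         (forall x v w, is_grad f x v -> is_grad phi x w -> v <> vzero ->
            w = vscale (G (vnorm v) / vnorm v) v) /\
         (forall x v w, is_grad f x v -> is_grad phi x w -> v = vzero ->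
            w = vzero))
  /\
  (* (ii) *)
  ((exists (G G' : R -> R) (phi : vec n -> R),
      nondecr G /\ C1_with G G' /\ convex phi /\ C2fun phi /\
      G 0 = 0 /\
      almost_everywhere (fun s => s * G' s - G s <> 0) /\
      (forall x v w, is_grad f x v -> is_grad phi x w -> v <> vzero ->
         w = vscale (G (vnorm v) / vnorm v) v)) ->
   classF f).
Proof.
move=> Hconv HC2.
have [Df [D2f Hdat]] := C2fun_data n f HC2.
have Hhess : forall y, is_hess f y (D2f y).
  move=> y; case: Hdat => H1 [H2 _]; exists Df; split => //; move=> i j; exact: H2.
have Hgradf : forall x v, is_grad f x v -> v = Df x.
  move=> x v Hv; case: Hdat => H1 _; exact: grad_unique Hv (H1 x).
split.
- move=> HF G Hmono [G' [HG HG']] HG0.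
  have Heig : forall y, exists lam, mat_app (D2f y) (Df y) = vscale lam (Df y).
    move=> y; case: HF => _ [_ H]; apply: H; last exact: Hhess.
    by case: Hdat.
  exists (phi0 n Df G); split; first exact: (phi_classF n f Df D2f Hdat Hconv Heig G G' HG HG' HG0 Hmono).
  have Hpd := phi_data n f Df D2f Hdat Heig G G' HG HG' HG0.
  have Hgradp : forall x w, is_grad (phi0 n Df G) x w -> w = Fv n Df G x.
    move=> x w Hw; case: Hpd => H1 _; exact: grad_unique Hw (H1 x).
  split.
  + move=> x v w Hv Hw _; rewrite (Hgradp x w Hw) (Hgradf x v Hv); by [].
  + move=> x v w Hv Hw Hz; rewrite (Hgradp x w Hw) /Fv -(Hgradf x v Hv) Hz; exact: Psi_zero.
- case=> G [G' [phi [Hmono [[HG HG'] [Hcphi [HC2phi [HG0 [Hae Hrel]]]]]]]].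
  have [Dphi [D2phi Hpdat]] := C2fun_data n phi HC2phi.
  have Hrel' : forall y, Df y <> vzero -> Dphi y = Psi G (Df y).
    move=> y Hy; apply: (Hrel y) => //; [by case: Hdat | by case: Hpdat].
  split => //; split => //.
  move=> x v H Hv [Dg [HDg HH]].
  rewrite (Hgradf x v Hv).
  have EDg : Dg = Df by apply: functional_extensionality => y; exact: Hgradf.
  have EH : H = D2f x.
    apply: functional_extensionality => i; apply: functional_extensionality => j.
    rewrite EDg in HH; case: Hdat => _ [H2 _]; exact: uniqueness_limite (HH i j) (H2 x i j).
  rewrite EH; exact: (f_eig n f Df D2f Hdat G G' HG HG' HG0 phi Dphi D2phi Hpdat Hrel' Hae x).
Qed.
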